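(* Consider the $7$-dimensional nilpotent Lie algebras with basis $\{e_1,\dots,e_7\}$ and dual basis $\{e^i\}$ given by $(de^1,\dots,de^7)$: $\mathfrak g_1$: $(0,0,e^{12},e^{13},e^{23},e^{15}+e^{24},e^{16}+e^{34})$; $\mathfrak g_2$: $(0,0,0,-e^{12},e^{14}+e^{23},e^{15}+e^{34},e^{16}+e^{35})$; $\mathfrak g_3$: $(0,0,e^{12},e^{13},e^{14}+e^{23},e^{15}+e^{24},e^{25}-e^{34})$. Then the sets $\mathbf S$ of signatures of diagonal metrics satisfying $\operatorname{Ric}=-\frac12\mathrm{id}+\frac12N$ are: for $\mathfrak g_1$, $\{\emptyset,12457,1357,234,125,1345,237,47\}$; for $\mathfrak g_2$, $\{\emptyset,1257,146,24567,123467,135,237,3456\}$; for $\mathfrak g_3$, $\{\emptyset,1357\}$.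
   Context: $d$ is the Chevalley–Eilenberg differential and $e^{ij}=e^i\wedge e^j$; the basis $\{e_i\}$ is a nice basis. The root matrix $M_\Delta$ has one row for each triple $(\{i,j\},k)$ with $[e_i,e_j]$ a nonzero multiple of $e_k$, with $+1$ in position $k$, $-1$ in positions $i,j$, $0$ elsewhere. $N$ is the diagonal Nikolayevsky derivation: the diagonal matrix with diagonal $M_\Delta^Tb+[1]$, where $b$ solves $M_\Delta M_\Delta^Tb=[1]$, $[1]$ the all-ones vector. A diagonal metric is $\sum_ig_ie^i\otimes e^i$, $g_i\neq0$, with Ricci operator $\operatorname{Ric}$. A signature is recorded as the string of indices $i$ with $g_i<0$; $\emptyset$ denotes positive definite. *)

(* Defs.v *)
From HB Require Import structures.
From mathcomp Require Import all_boot all_order all_algebra.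
From mathcomp Require Import reals.
Set Implicit Arguments. Unset Strict Implicit. Unset Printing Implicit Defensive.
Import Order.TTheory GRing.Theory Num.Theory.
Local Open Scope ring_scope.

(* Lie algebras given by structure constants on a basis e_0..e_{n-1}:        *)
(*   [e_i, e_j] = \sum_k c i j k e_k.                                        *)

(* Differentials, given 1-based: D k is a list of (p, q, a) meaning that     *)
(* de^k contains the term a e^{pq} = a e^p /\ e^q.                           *)
Local Close Scope ring_scope.
Definition dform := nat -> seq (nat * nat * int).

(* de^k(e_i, e_j) (1-based indices), with e^{pq}(e_p,e_q) = 1.               *)
Definition dcoef (D : dform) (k i j : nat) : int :=
  \sum_(t <- D k)
     (if (t.1.1 == i) && (t.1.2 == j) then t.2
      else if (t.1.1 == j) && (t.1.2 == i) then - t.2 else 0).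

Local Open Scope ring_scope.
(* Chevalley--Eilenberg convention de^k(X,Y) = - e^k([X,Y]), hence the       *)
(* structure constants (0-based indices in 'I_n).                            *)
Definition sc_of (R : nzRingType) (n : nat) (D : dform) (i j k : 'I_n) : R :=
  (- dcoef D k.+1 i.+1 j.+1)%:~R.

(* Left-invariant diagonal metric  g = \sum_i g_i e^i (x) e^i  (g_i <> 0).   *)

(* Levi-Civita connection via the Koszul formula:                           *)
(*  2 g(nabla_X Y, Z) = g([X,Y],Z) - g([Y,Z],X) + g([Z,X],Y);                *)
(*  LC c g i j k = coefficient of e_k in nabla_{e_i} e_j.                    *)
Definition LC (R : fieldType) n (c : 'I_n -> 'I_n -> 'I_n -> R) (g : 'I_n -> R)
  (i j k : 'I_n) : R :=
  (c i j k * g k - c j k i * g i + c k i j * g j) / (2 * g k).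

(* Curvature R(X,Y) = [nabla_X, nabla_Y] - nabla_[X,Y];                      *)
(* curv a b c d = coefficient of e_d in R(e_a,e_b) e_c.                      *)
Definition curv (R : fieldType) n (c : 'I_n -> 'I_n -> 'I_n -> R) (g : 'I_n -> R)
  (a b k d : 'I_n) : R :=
  \sum_(m < n) LC c g b k m * LC c g a m d
  - \sum_(m < n) LC c g a k m * LC c g b m d
  - \sum_(m < n) c a b m * LC c g m k d.

(* Ricci tensor ric(Y,Z) = tr (X |-> R(X,Y) Z).                              *)
Definition ric (R : fieldType) n (c : 'I_n -> 'I_n -> 'I_n -> R) (g : 'I_n -> R)
  (b k : 'I_n) : R :=
  \sum_(a < n) curv c g a b k a.

(* Ricci operator: g(Ric X, Y) = ric(X,Y);                                   *)
(* Ric_op c g b d = coefficient of e_d in Ric(e_b).                          *)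
Definition Ric_op (R : fieldType) n (c : 'I_n -> 'I_n -> 'I_n -> R) (g : 'I_n -> R)
  (b d : 'I_n) : R :=
  ric c g b d / g d.

Definition Delta (R : nzRingType) n (c : 'I_n -> 'I_n -> 'I_n -> R)
  : {set 'I_n * 'I_n * 'I_n} :=
  [set t : 'I_n * 'I_n * 'I_n | (t.1.1 < t.1.2)%N && (c t.1.1 t.1.2 t.2 != 0)
           && [forall l, (l != t.2) ==> (c t.1.1 t.1.2 l == 0)]].

(* Row of the root matrix M_Delta indexed by the triple t = ((i,j),k):       *)
Definition rootrow (R : nzRingType) n (t : 'I_n * 'I_n * 'I_n) (l : 'I_n) : R :=
  (l == t.2)%:R - (l == t.1.1)%:R - (l == t.1.2)%:R.

(* v is the diagonal of N = diag(M^T b + [1]) where M M^T b = [1].           *)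
(* (M^T b is uniquely determined by M M^T b = [1], so N is well defined.)    *)
Definition nik_diag (R : nzRingType) n (c : 'I_n -> 'I_n -> 'I_n -> R)
  (v : 'I_n -> R) : Prop :=
  exists b : 'I_n * 'I_n * 'I_n -> R,
    (forall t, t \in Delta c ->
       \sum_(s in Delta c) (\sum_(l < n) rootrow R t l * rootrow R s l) * b s = 1)
    /\ (forall l, v l = \sum_(t in Delta c) rootrow R t l * b t + 1).

Definition ric_nik (R : fieldType) n (c : 'I_n -> 'I_n -> 'I_n -> R)
  (g : 'I_n -> R) : Prop :=
  exists v, nik_diag c v /\
    forall b d : 'I_n,
      Ric_op c g b d = (if b == d then - 2^-1 + 2^-1 * v b else 0).

Definition signature (R : realDomainType) n (g : 'I_n -> R) : {set 'I_n} :=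
  [set i | g i < 0].

Definition is_sig (R : realFieldType) n (c : 'I_n -> 'I_n -> 'I_n -> R)
  (S : {set 'I_n}) : Prop :=
  exists g : 'I_n -> R, (forall i, g i != 0) /\ signature g = S /\ ric_nik c g.

(* A signature written as a string of 1-based indices, e.g. [:: 1;3;5;7].   *)
Definition sig_of n (s : seq nat) : {set 'I_n} := [set i : 'I_n | i.+1 \in s].

Local Close Scope ring_scope.
Definition D1 : dform := fun k =>
  match k with
  | 3 => [:: (1, 2, Posz 1)]
  | 4 => [:: (1, 3, Posz 1)]
  | 5 => [:: (2, 3, Posz 1)]
  | 6 => [:: (1, 5, Posz 1); (2, 4, Posz 1)]
  | 7 => [:: (1, 6, Posz 1); (3, 4, Posz 1)]
  | _ => [::]
  end.

Definition D2 : dform := fun k =>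
  match k with
  | 4 => [:: (1, 2, Negz 0) (* = -1 *)]
  | 5 => [:: (1, 4, Posz 1); (2, 3, Posz 1)]
  | 6 => [:: (1, 5, Posz 1); (3, 4, Posz 1)]
  | 7 => [:: (1, 6, Posz 1); (3, 5, Posz 1)]
  | _ => [::]
  end.

Definition D3 : dform := fun k =>
  match k with
  | 3 => [:: (1, 2, Posz 1)]
  | 4 => [:: (1, 3, Posz 1)]
  | 5 => [:: (1, 4, Posz 1); (2, 3, Posz 1)]
  | 6 => [:: (1, 5, Posz 1); (2, 4, Posz 1)]
  | 7 => [:: (2, 5, Posz 1); (3, 4, Negz 0) (* = -1 *)]
  | _ => [::]
  end.

(* Main.v *)
Require Import Defs.
From HB Require Import structures.
From mathcomp Require Import all_boot all_order all_algebra.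
From mathcomp Require Import reals.
From mathcomp Require Import ring lra.
Import Order.TTheory GRing.Theory Num.Theory.
Local Open Scope ring_scope.
Notation o_ k := (@Ordinal 7 k isT).

Lemma sum7 (R : nmodType) (F : 'I_7 -> R) :
  \sum_(i < 7) F i = F (o_ 0) + F (o_ 1) + F (o_ 2) + F (o_ 3) + F (o_ 4) + F (o_ 5) + F (o_ 6).
Proof.
rewrite !big_ord_recr big_ord0 /= add0r.
by repeat f_equal; apply/val_inj.
Qed.

Lemma ord7 (P : 'I_7 -> Prop) : P (o_ 0) -> P (o_ 1) -> P (o_ 2) -> P (o_ 3) ->
  P (o_ 4) -> P (o_ 5) -> P (o_ 6) -> forall i, P i.
Proof.
move=> H0 H1 H2 H3 H4 H5 H6 [[|[|[|[|[|[|[|n]]]]]]] Hi] //;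
  by rewrite (bool_irrelevance Hi isT).
Qed.

Definition dcoefb (D : dform) (k i j : nat) : int :=
  foldr (fun t acc => (if (t.1.1 == i) && (t.1.2 == j) then t.2
      else if (t.1.1 == j) && (t.1.2 == i) then - t.2 else 0) + acc) 0 (D k).

Lemma dcoefE D k i j : dcoef D k i j = dcoefb D k i j.
Proof. by rewrite /dcoef unlock. Qed.

Definition tb (D : dform) (i j k : nat) : int := - dcoefb D k.+1 i.+1 j.+1.

Lemma c_tb (R : nzRingType) D (i j k : 'I_7) : @sc_of R 7 D i j k = (tb D i j k)%:~R.
Proof. by rewrite /sc_of dcoefE. Qed.

Definition poly := seq (int * seq int).

Fixpoint addv (e f : seq int) : seq int :=
  match e, f with
  | a :: e', b :: f' => (a + b) :: addv e' f'
  | [::], _ => f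
  | _, [::] => e
  end.
Definition negv (e : seq int) := map (fun a => - a) e.
Definition uv (i : nat) : seq int := mkseq (fun j => ((j == i) : nat)%:Z) 7.

Lemma nth_addv e f i : nth 0 (addv e f) i = nth 0 e i + nth 0 f i.
Proof. by elim: e f i => [|a e IH] [|b f] [|i] //=; rewrite ?addr0 ?add0r. Qed.
Lemma nth_negv e i : nth 0 (negv e) i = - nth 0 e i.
Proof. by elim: e i => [|a e IH] [|i] //=; rewrite oppr0. Qed.

Arguments addv : simpl never.
Arguments negv : simpl never.
Arguments uv : simpl never.

Definition clean (P : poly) : poly := filter (fun t => t.1 != 0) P.
Definition pscale (z : int) (P : poly) : poly := map (fun t => (z * t.1, t.2)) P.
Definition pmul (P Q : poly) : poly :=
  flatten (map (fun a => map (fun b => (a.1 * b.1, addv a.2 b.2)) Q) P).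
Definition psum (f : nat -> poly) : poly := flatten (map f (iota 0 7)).
Fixpoint ins (t : int * seq int) (P : poly) : poly :=
  match P with
  | [::] => [:: t]
  | u :: P' => if u.2 == t.2 then (u.1 + t.1, u.2) :: P' else u :: ins t P'
  end.
Definition collect (P : poly) := foldr ins [::] P.
Definition pzero (P : poly) := all (fun t => t.1 == 0) (collect P).

Definition LCp D (i j k : nat) : poly :=
  clean [:: (tb D i j k, [::]); (- tb D j k i, addv (uv i) (negv (uv k)));
            (tb D k i j, addv (uv j) (negv (uv k)))].
Definition curv4p D (a b k d : nat) : poly :=
  psum (fun m => pmul (LCp D b k m) (LCp D a m d)) ++
  pscale (-1) (psum (fun m => pmul (LCp D a k m) (LCp D b m d))) ++
  pscale (-2) (psum (fun m => pmul (clean [:: (tb D a b m, [::])]) (LCp D m k d))).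
Definition ric4p D (b k : nat) : poly := psum (fun a => curv4p D a b k a).
Definition Ric4p D (b d : nat) : poly := pmul (ric4p D b d) [:: (1, negv (uv d))].

Definition Mi (t : nat * nat * nat) (l : nat) : int :=
  ((l == t.2) : nat)%:Z - ((l == t.1.1) : nat)%:Z - ((l == t.1.2) : nat)%:Z.
Definition xv (t : nat * nat * nat) : seq int :=
  addv (uv t.2) (negv (addv (uv t.1.1) (uv t.1.2))).
Definition T4p (DL : seq (nat * nat * nat)) (b d : nat) : poly :=
  if b == d then pscale 2 (map (fun t => (Mi t b, xv t)) DL) else [::].

Definition checkRic D DL :=
  all (fun b => all (fun d => pzero (Ric4p D b d ++ pscale (-1) (T4p DL b d))) (iota 0 7)) (iota 0 7).

Section Interp.
Variable R : numFieldType.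
Variable g : 'I_7 -> R.
Definition gn (n : nat) : R := g (inord n).
Hypothesis gnz : forall i, g i != 0.

Lemma gnz' n : gn n != 0. Proof. exact: gnz. Qed.

Definition mon (e : seq int) : R := \prod_(i < 7) gn i ^ (nth 0 e i).

Lemma mon_add e f : mon (addv e f) = mon e * mon f.
Proof. rewrite /mon -big_split; apply: eq_bigr => i _; by rewrite nth_addv expfzDr // gnz'. Qed.
Lemma mon_neg e : mon (negv e) = (mon e)^-1.
Proof. rewrite /mon -prodfV; apply: eq_bigr => i _; by rewrite nth_negv invr_expz. Qed.
Lemma mon_nil : mon [::] = 1.
Proof. by rewrite /mon big1 // => i _; rewrite nth_nil expr0z. Qed.
Lemma mon_uv (i : 'I_7) : mon (uv i) = gn i.
Proof.
rewrite /mon (bigD1 i) //= big1 ?mulr1.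
  by rewrite /uv nth_mkseq // eqxx expr1z.
move=> j; rewrite -val_eqE => /negbTE ji; by rewrite /uv nth_mkseq // ji expr0z.
Qed.
Lemma mon_uvn n : (n < 7)%N -> mon (uv n) = gn n.
Proof. move=> H; exact: (mon_uv (Ordinal H)). Qed.

Arguments mon : simpl never.
Definition interp (P : poly) : R := foldr (fun t acc => t.1%:~R * mon t.2 + acc) 0 P.

Lemma interp_cat P Q : interp (P ++ Q) = interp P + interp Q.
Proof. by elim: P => [|t P IH] /=; [rewrite add0r | rewrite IH addrA]. Qed.
Lemma interp_scale z P : interp (pscale z P) = z%:~R * interp P.
Proof. by elim: P => [|t P IH] /=; [rewrite mulr0 | rewrite IH intrM mulrDr mulrA]. Qed.
Lemma interp_clean P : interp (clean P) = interp P.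
Proof.
elim: P => [|t P IH] //=; case: eqP => [->|_] /=; by rewrite IH ?mul0r ?add0r.
Qed.
Lemma interp_mul P Q : interp (pmul P Q) = interp P * interp Q.
Proof.
elim: P => [|a P IH] /=; first by rewrite mul0r.
rewrite interp_cat IH mulrDl; congr (_ + _).
clear IH; elim: Q => [|b Q IHQ] /=; first by rewrite mulr0.
by rewrite IHQ mon_add intrM mulrDr mulrACA.
Qed.

Lemma interp_psum f : interp (psum f) = \sum_(m < 7) interp (f m).
Proof.
rewrite /psum -(big_mkord xpredT (fun m => interp (f m))) /index_iota subn0.
elim: (iota 0 7) => [|m s IH] /=; first by rewrite big_nil.
by rewrite interp_cat IH big_cons.
Qed.
Lemma interp_ins t P : interp (ins t P) = interp (t :: P).
Proof.
elim: P => [|u P IH] //=; case: eqP => [e|_] /=.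
  rewrite intrD e; ring.
rewrite IH /=; ring.
Qed.
Lemma interp_collect P : interp (collect P) = interp P.
Proof. by elim: P => //= t P IH; rewrite interp_ins /= IH. Qed.
Lemma pzeroP P : pzero P -> interp P = 0.
Proof.
rewrite /pzero -interp_collect; elim: (collect P) => //= t l IH /andP[/eqP -> /IH ->].
by rewrite mul0r addr0.
Qed.

Opaque psum pmul pscale clean.
Variable D : dform.
Let c := @sc_of R 7 D.

Lemma gn_val (i : 'I_7) : gn i = g i.
Proof. by rewrite /gn inord_val. Qed.

Lemma interp_LC (i j k : 'I_7) : interp (LCp D i j k) = 2 * LC c g i j k.
Proof.
rewrite interp_clean /= !mon_add !mon_neg !mon_uv mon_nil !gn_val /LC /c !c_tb.
have := gnz k; have := gnz i; have := gnz j => ?? ?.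
by field.
Qed.

Lemma interp_curv (a b k d : 'I_7) : interp (curv4p D a b k d) = 4 * curv c g a b k d.
Proof.
rewrite /curv4p interp_cat [X in _ + X]interp_cat !interp_scale !interp_psum /curv.
have E1 : forall (x y z w : 'I_7), \sum_(m < 7) interp (pmul (LCp D x y m) (LCp D z m w))
   = 4 * \sum_(m < 7) LC c g x y m * LC c g z m w.
  move=> x y z w; rewrite mulr_sumr; apply: eq_bigr => m _.
  by rewrite interp_mul !interp_LC; ring.
have E3 : \sum_(m < 7) interp (pmul (clean [:: (tb D a b m, [::])]) (LCp D m k d))
   = 2 * \sum_(m < 7) c a b m * LC c g m k d.
  rewrite mulr_sumr; apply: eq_bigr => m _.
  rewrite interp_mul interp_clean interp_LC /= mon_nil /c c_tb.
  by rewrite mulr1 addr0 mulrCA.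
rewrite !E1 E3; ring.
Qed.

Lemma interp_Ric (b d : 'I_7) : interp (Ric4p D b d) = 4 * Ric_op c g b d.
Proof.
rewrite /Ric4p interp_mul /ric4p interp_psum /= mon_neg mon_uv gn_val /Ric_op /ric.
under eq_bigr => a _ do rewrite interp_curv.
rewrite -mulr_sumr; ring.
Qed.

Definition Xg (t : nat * nat * nat) : R := gn t.2 / (gn t.1.1 * gn t.1.2).

Lemma RicE DL : checkRic D DL -> all (fun t => [&& t.1.1 < 7, t.1.2 < 7 & t.2 < 7]%N) DL ->
  forall b d : 'I_7, Ric_op c g b d =
    if b == d then 2^-1 * \sum_(t <- DL) (Mi t b)%:~R * Xg t else 0.
Proof.
move=> hc hDL b d.
have : pzero (Ric4p D b d ++ pscale (-1) (T4p DL b d)).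
  move/allP: hc => /(_ b); rewrite mem_iota add0n ltn_ord => /(_ isT) /allP /(_ d).
  by rewrite mem_iota add0n ltn_ord => /(_ isT).
move/pzeroP; rewrite interp_cat interp_scale interp_Ric => /eqP.
rewrite mulN1r subr_eq0 => /eqP H.
have -> : Ric_op c g b d = 4^-1 * interp (T4p DL b d) by rewrite -H; field.
rewrite /T4p val_eqE; case: eqP => [->|_]; last by rewrite /= mulr0.
rewrite interp_scale.
have -> : interp [seq (Mi t d, xv t) | t <- DL] = \sum_(t <- DL) (Mi t d)%:~R * Xg t.
  clear hc H; elim: DL hDL => [|t DL IH] /=; first by rewrite big_nil.
  case/andP=> /and3P[h1 h2 h3] hr; rewrite big_cons IH //; congr (_ * _ + _).
  by rewrite /xv /Xg !mon_add !mon_neg !mon_add !mon_uvn.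
by field.
Qed.
End Interp.

Definition deltab D (t : 'I_7 * 'I_7 * 'I_7) : bool :=
  (t.1.1 < t.1.2)%N && (tb D t.1.1 t.1.2 t.2 != 0) &&
  [forall l : 'I_7, (l != t.2) ==> (tb D t.1.1 t.1.2 l == 0)].

Lemma DeltaE (R : numDomainType) D : Delta (@sc_of R 7 D) = [set t | deltab D t].
Proof.
apply/setP => t; rewrite !inE /deltab c_tb intr_eq0; congr (_ && _).
by apply: eq_forallb => l; rewrite c_tb intr_eq0.
Qed.


Definition deltan D (i j k : nat) : bool :=
  (i < j)%N && (tb D i j k != 0) && all (fun l => (l != k) ==> (tb D i j l == 0)) (iota 0 7).
Definition untri (t : 'I_7 * 'I_7 * 'I_7) : nat * nat * nat := (val t.1.1, val t.1.2, val t.2).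
Definition tri (x : nat * nat * nat) : 'I_7 * 'I_7 * 'I_7 := (inord x.1.1, inord x.1.2, inord x.2).
Definition bnd (x : nat * nat * nat) := [&& x.1.1 < 7, x.1.2 < 7 & x.2 < 7]%N.

Lemma forall7 (Q : pred nat) : [forall l : 'I_7, Q l] = all Q (iota 0 7).
Proof.
apply/forallP/allP => [H x|H x]; last by apply: H; rewrite mem_iota /=.
by rewrite mem_iota add0n => /andP[_ hx]; exact: (H (Ordinal hx)).
Qed.

Lemma deltabn D t : deltab D t = deltan D t.1.1 t.1.2 t.2.
Proof.
rewrite /deltab /deltan; congr (_ && _).
rewrite -(forall7 (fun l => (l != t.2) ==> (tb D t.1.1 t.1.2 l == 0))).
by apply: eq_forallb => l; rewrite val_eqE.
Qed.

Lemma mem_tri DL t : all bnd DL -> (t \in map tri DL) = (untri t \in DL).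
Proof.
move=> /allP hb; apply/mapP/idP => [[x xin ->]|tin].
  have /and3P[h1 h2 h3] := hb x xin.
  by rewrite /untri /tri /= !inordK // -!surjective_pairing.
exists (untri t) => //; case: t {tin} => [[a b] c]; by rewrite /tri /= !inord_val.
Qed.

Definition checkDelta D (DL : seq (nat * nat * nat)) :=
  all (fun i => all (fun j => all (fun k => deltan D i j k == ((i, j, k) \in DL))
     (iota 0 7)) (iota 0 7)) (iota 0 7).

Lemma DeltaL (R : numDomainType) D DL : checkDelta D DL -> all bnd DL ->
  Delta (@sc_of R 7 D) = [set t | t \in map tri DL].
Proof.
move=> hc hb; rewrite DeltaE; apply/setP => t; rewrite !inE mem_tri // deltabn.
case: t => [[a b] k] /=.
move/allP: hc => /(_ a); rewrite mem_iota add0n ltn_ord => /(_ isT) /allP /(_ b).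
rewrite mem_iota add0n ltn_ord => /(_ isT) /allP /(_ k).
by rewrite mem_iota add0n ltn_ord => /(_ isT) /eqP.
Qed.

Lemma sumDelta (R : numDomainType) D DL DLo (F : 'I_7 * 'I_7 * 'I_7 -> R) :
  checkDelta D DL -> all bnd DL -> DLo = map tri DL -> uniq DLo ->
  \sum_(t in Delta (@sc_of R 7 D)) F t = \sum_(t <- DLo) F t.
Proof.
move=> hc hb hD hu; rewrite (@DeltaL R D DL hc hb) -hD big_uniq //.
by apply: eq_bigl => t; rewrite inE.
Qed.

Lemma memDelta (R : numDomainType) D DL DLo t :
  checkDelta D DL -> all bnd DL -> DLo = map tri DL ->
  (t \in Delta (@sc_of R 7 D)) = (t \in DLo).
Proof. by move=> hc hb hD; rewrite (@DeltaL R D DL hc hb) inE hD. Qed.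

Definition MiR (R : nzRingType) (t : nat * nat * nat) (l : nat) : R :=
  ((l == t.2) : nat)%:R - ((l == t.1.1) : nat)%:R - ((l == t.1.2) : nat)%:R.

Lemma MiRE (R : nzRingType) t l : (Mi t l)%:~R = MiR R t l.
Proof. by rewrite /Mi /MiR !intrB -!pmulrn. Qed.

Lemma RicE' (R : numFieldType) D DL (g : 'I_7 -> R) : (forall i, g i != 0) ->
  checkRic D DL -> all bnd DL ->
  forall b d : 'I_7, Ric_op (@sc_of R 7 D) g b d =
    if b == d then 2^-1 * \sum_(t <- DL) MiR R t b * Xg R g t else 0.
Proof.
move=> gnz hc hb b d; rewrite (@RicE R g gnz D DL hc hb).
by case: eqP => // _; congr (_ * _); apply: eq_bigr => t _; rewrite MiRE.
Qed.


Lemma sgn_pos (R : realFieldType) (a b c : R) : a != 0 -> b != 0 -> 0 < c / (a * b) ->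
  (c < 0) = ((a < 0) (+) (b < 0)).
Proof.
move=> a0 b0 h; have ab0 : a * b != 0 by rewrite mulf_neq0.
have E : c = (c / (a * b)) * (a * b) by rewrite divfK.
by rewrite E pmulr_rlt0 // mulr_lt0 a0 b0.
Qed.
Lemma sgn_neg (R : realFieldType) (a b c : R) : a != 0 -> b != 0 -> c / (a * b) < 0 ->
  (c < 0) = ~~ ((a < 0) (+) (b < 0)).
Proof.
move=> a0 b0 h; have ab0 : a * b != 0 by rewrite mulf_neq0.
have E : c = (- (c / (a * b))) * ((- a) * b) by rewrite !mulNr mulrN opprK divfK.
rewrite E.
rewrite pmulr_rlt0 ?oppr_gt0 // mulr_lt0 oppr_eq0 a0 b0 oppr_lt0 /=.
by rewrite ltNge le_eqVlt (negbTE a0) /= addNb.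
Qed.

Lemma sig_decide (R : realDomainType) (g : 'I_7 -> R) (bs : seq bool) (L : seq (seq nat)) :
  (forall i : 'I_7, (g i < 0) = nth false bs i) ->
  has (fun l => all (fun i => nth false bs i == (i.+1 \in l)) (iota 0 7)) L ->
  [set i | g i < 0] \in map (sig_of 7) L.
Proof.
move=> H /hasP [l lL /allP E]; apply/mapP; exists l => //; apply/setP => i.
by rewrite !inE H; apply/eqP/E; rewrite mem_iota add0n ltn_ord.
Qed.

Lemma gno (R : numFieldType) (g : 'I_7 -> R) n (H : (n < 7)%N) : gn R g n = g (Ordinal H).
Proof. by rewrite /gn; congr g; apply/val_inj; rewrite /= inordK. Qed.

Lemma allP_prop (T : eqType) (P : T -> Prop) (l : seq T) :
  foldr (fun x acc => P x /\ acc) True l -> forall x, x \in l -> P x.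
Proof.
elim: l => [|a l IH] //= [Pa Hl] x; rewrite inE => /orP[/eqP->//|]; exact: IH.
Qed.

Lemma ltb_true (R : realDomainType) (x : R) : x < 0 -> (x < 0) = true.
Proof. by []. Qed.
Lemma ltb_false (R : realDomainType) (x : R) : 0 < x -> (x < 0) = false.
Proof. by move=> h; rewrite ltNge ltW. Qed.

Lemma gnE (R : numFieldType) (l : seq R) n : (n < 7)%N ->
  gn R (fun i : 'I_7 => nth 0 l i) n = nth 0 l n.
Proof. by move=> h; rewrite /gn inordK. Qed.

Definition DL1 : seq (nat * nat * nat) := [:: (0,1,2); (0,2,3); (0,4,5); (0,5,6); (1,2,4); (1,3,5); (2,3,6)]%N.
Definition DLo1 : seq ('I_7 * 'I_7 * 'I_7) := [:: (o_ 0, o_ 1, o_ 2); (o_ 0, o_ 2, o_ 3); (o_ 0, o_ 4, o_ 5); (o_ 0, o_ 5, o_ 6); (o_ 1, o_ 2, o_ 4); (o_ 1, o_ 3, o_ 5); (o_ 2, o_ 3, o_ 6)].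
Lemma c1R : checkRic D1 DL1. Proof. by vm_compute. Qed.
Lemma c1D : checkDelta D1 DL1. Proof. by vm_compute. Qed.
Lemma c1b : all bnd DL1. Proof. by []. Qed.
Lemma c1o : DLo1 = map tri DL1.
Proof. rewrite /DLo1 /= /tri /=; by repeat f_equal; apply/val_inj; rewrite /= inordK. Qed.
Lemma c1u : uniq DLo1. Proof. by vm_compute. Qed.

Definition SigL1 : seq (seq nat) := [:: [:: ]; [:: 1; 2; 4; 5; 7]; [:: 1; 3; 5; 7]; [:: 2; 3; 4]; [:: 1; 2; 5]; [:: 1; 3; 4; 5]; [:: 2; 3; 7]; [:: 4; 7]]%N.

Lemma key1_0 : forall s0 s1 s2 s3 s4 s5 s6 : bool,
  s2 = (s0 (+) s1) -> s3 = (s0 (+) s2) -> s5 = (s0 (+) s4) -> s6 = (s0 (+) s5) -> s4 = (s1 (+) s2) -> s5 = (s1 (+) s3) -> s6 = (s2 (+) s3) ->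
  has (fun l => all (fun i => nth false [:: s0; s1; s2; s3; s4; s5; s6] i == (i.+1 \in l)) (iota 0 7)) SigL1.
Proof. by case; case; case; case; case; case; case. Qed.

Lemma key1_1 : forall s0 s1 s2 s3 s4 s5 s6 : bool,
  s2 = (s0 (+) s1) -> s3 = ~~ (s0 (+) s2) -> s5 = (s0 (+) s4) -> s6 = ~~ (s0 (+) s5) -> s4 = (s1 (+) s2) -> s5 = ~~ (s1 (+) s3) -> s6 = (s2 (+) s3) ->
  has (fun l => all (fun i => nth false [:: s0; s1; s2; s3; s4; s5; s6] i == (i.+1 \in l)) (iota 0 7)) SigL1.
Proof. by case; case; case; case; case; case; case. Qed.

Lemma fwd1 (R : realType) (g : 'I_7 -> R) : (forall i, g i != 0) -> ric_nik (@sc_of R 7 D1) g ->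
  [set i | g i < 0] \in map (sig_of 7) SigL1.
Proof.
move=> gnz [v [[b [Hb Hv]] HR]].
have RE := @RicE' R D1 DL1 g gnz c1R c1b.
have SD := fun F => @sumDelta R D1 DL1 DLo1 F c1D c1b c1o c1u.
have MD := fun t => @memDelta R D1 DL1 DLo1 t c1D c1b c1o.
have r0 := HR (o_ 0) (o_ 0); rewrite RE eqxx !big_cons big_nil /MiR /Xg /= in r0.
have r1 := HR (o_ 1) (o_ 1); rewrite RE eqxx !big_cons big_nil /MiR /Xg /= in r1.
have r2 := HR (o_ 2) (o_ 2); rewrite RE eqxx !big_cons big_nil /MiR /Xg /= in r2.
have r3 := HR (o_ 3) (o_ 3); rewrite RE eqxx !big_cons big_nil /MiR /Xg /= in r3.
have r4 := HR (o_ 4) (o_ 4); rewrite RE eqxx !big_cons big_nil /MiR /Xg /= in r4.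
have r5 := HR (o_ 5) (o_ 5); rewrite RE eqxx !big_cons big_nil /MiR /Xg /= in r5.
have r6 := HR (o_ 6) (o_ 6); rewrite RE eqxx !big_cons big_nil /MiR /Xg /= in r6.
have v0 := Hv (o_ 0); rewrite SD !big_cons big_nil /rootrow /= in v0.
have v1 := Hv (o_ 1); rewrite SD !big_cons big_nil /rootrow /= in v1.
have v2 := Hv (o_ 2); rewrite SD !big_cons big_nil /rootrow /= in v2.
have v3 := Hv (o_ 3); rewrite SD !big_cons big_nil /rootrow /= in v3.
have v4 := Hv (o_ 4); rewrite SD !big_cons big_nil /rootrow /= in v4.
have v5 := Hv (o_ 5); rewrite SD !big_cons big_nil /rootrow /= in v5.
have v6 := Hv (o_ 6); rewrite SD !big_cons big_nil /rootrow /= in v6.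
have b0 := Hb (o_ 0, o_ 1, o_ 2); rewrite MD SD !big_cons big_nil !sum7 /rootrow /= in b0.
have b1 := Hb (o_ 0, o_ 2, o_ 3); rewrite MD SD !big_cons big_nil !sum7 /rootrow /= in b1.
have b2 := Hb (o_ 0, o_ 4, o_ 5); rewrite MD SD !big_cons big_nil !sum7 /rootrow /= in b2.
have b3 := Hb (o_ 0, o_ 5, o_ 6); rewrite MD SD !big_cons big_nil !sum7 /rootrow /= in b3.
have b4 := Hb (o_ 1, o_ 2, o_ 4); rewrite MD SD !big_cons big_nil !sum7 /rootrow /= in b4.
have b5 := Hb (o_ 1, o_ 3, o_ 5); rewrite MD SD !big_cons big_nil !sum7 /rootrow /= in b5.
have b6 := Hb (o_ 2, o_ 3, o_ 6); rewrite MD SD !big_cons big_nil !sum7 /rootrow /= in b6.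
move: {b0}(b0 isT) {b1}(b1 isT) {b2}(b2 isT) {b3}(b3 isT) {b4}(b4 isT) {b5}(b5 isT) {b6}(b6 isT) => b0 b1 b2 b3 b4 b5 b6.
have g0 := gnz (inord 0); have g1 := gnz (inord 1); have g2 := gnz (inord 2);
have g3 := gnz (inord 3); have g4 := gnz (inord 4); have g5 := gnz (inord 5); have g6 := gnz (inord 6).
have P1 : Xg R g (0,5,6)%N * Xg R g (1,3,5)%N = Xg R g (0,1,2)%N * Xg R g (2,3,6)%N.
  rewrite /Xg /gn /=; field; by rewrite ?g0 ?g1 ?g2 ?g3 ?g4 ?g5 ?g6.
have P2 : Xg R g (0,4,5)%N * Xg R g (1,2,4)%N = Xg R g (0,2,3)%N * Xg R g (1,3,5)%N.
  rewrite /Xg /gn /=; field; by rewrite ?g0 ?g1 ?g2 ?g3 ?g4 ?g5 ?g6.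
rewrite /Xg /= in P1 P2.
set x1 := gn R g 2 / (gn R g 0 * gn R g 1) in r0 r1 r2 r3 r4 r5 r6 P1 P2.
set x2 := gn R g 3 / (gn R g 0 * gn R g 2) in r0 r1 r2 r3 r4 r5 r6 P1 P2.
set x3 := gn R g 5 / (gn R g 0 * gn R g 4) in r0 r1 r2 r3 r4 r5 r6 P1 P2.
set x4 := gn R g 6 / (gn R g 0 * gn R g 5) in r0 r1 r2 r3 r4 r5 r6 P1 P2.
set x5 := gn R g 4 / (gn R g 1 * gn R g 2) in r0 r1 r2 r3 r4 r5 r6 P1 P2.
set x6 := gn R g 5 / (gn R g 1 * gn R g 3) in r0 r1 r2 r3 r4 r5 r6 P1 P2.
set x7 := gn R g 6 / (gn R g 2 * gn R g 3) in r0 r1 r2 r3 r4 r5 r6 P1 P2.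
have E0 : (-1) * x1 + (-1) * x2 + (-1) * x3 + (-1) * x4 = (-1) * b (o_ 0, o_ 1, o_ 2) + (-1) * b (o_ 0, o_ 2, o_ 3) + (-1) * b (o_ 0, o_ 4, o_ 5) + (-1) * b (o_ 0, o_ 5, o_ 6) by clear -r0 v0; lra.
have E1 : (-1) * x1 + (-1) * x5 + (-1) * x6 = (-1) * b (o_ 0, o_ 1, o_ 2) + (-1) * b (o_ 1, o_ 2, o_ 4) + (-1) * b (o_ 1, o_ 3, o_ 5) by clear -r1 v1; lra.
have E2 : 1 * x1 + (-1) * x2 + (-1) * x5 + (-1) * x7 = 1 * b (o_ 0, o_ 1, o_ 2) + (-1) * b (o_ 0, o_ 2, o_ 3) + (-1) * b (o_ 1, o_ 2, o_ 4) + (-1) * b (o_ 2, o_ 3, o_ 6) by clear -r2 v2; lra.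
have E3 : 1 * x2 + (-1) * x6 + (-1) * x7 = 1 * b (o_ 0, o_ 2, o_ 3) + (-1) * b (o_ 1, o_ 3, o_ 5) + (-1) * b (o_ 2, o_ 3, o_ 6) by clear -r3 v3; lra.
have E4 : (-1) * x3 + 1 * x5 = (-1) * b (o_ 0, o_ 4, o_ 5) + 1 * b (o_ 1, o_ 2, o_ 4) by clear -r4 v4; lra.
have E5 : 1 * x3 + (-1) * x4 + 1 * x6 = 1 * b (o_ 0, o_ 4, o_ 5) + (-1) * b (o_ 0, o_ 5, o_ 6) + 1 * b (o_ 1, o_ 3, o_ 5) by clear -r5 v5; lra.
have E6 : 1 * x4 + 1 * x7 = 1 * b (o_ 0, o_ 5, o_ 6) + 1 * b (o_ 2, o_ 3, o_ 6) by clear -r6 v6; lra.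
have F0 : 3 * b (o_ 0, o_ 1, o_ 2) + 1 * b (o_ 0, o_ 4, o_ 5) + 1 * b (o_ 0, o_ 5, o_ 6) + 1 * b (o_ 1, o_ 3, o_ 5) + (-1) * b (o_ 2, o_ 3, o_ 6) = 1 by clear -b0; lra.
have F1 : 3 * b (o_ 0, o_ 2, o_ 3) + 1 * b (o_ 0, o_ 4, o_ 5) + 1 * b (o_ 0, o_ 5, o_ 6) + 1 * b (o_ 1, o_ 2, o_ 4) + (-1) * b (o_ 1, o_ 3, o_ 5) = 1 by clear -b1; lra.
have F2 : 1 * b (o_ 0, o_ 1, o_ 2) + 1 * b (o_ 0, o_ 2, o_ 3) + 3 * b (o_ 0, o_ 4, o_ 5) + (-1) * b (o_ 1, o_ 2, o_ 4) + 1 * b (o_ 1, o_ 3, o_ 5) = 1 by clear -b2; lra.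
have F3 : 1 * b (o_ 0, o_ 1, o_ 2) + 1 * b (o_ 0, o_ 2, o_ 3) + 3 * b (o_ 0, o_ 5, o_ 6) + (-1) * b (o_ 1, o_ 3, o_ 5) + 1 * b (o_ 2, o_ 3, o_ 6) = 1 by clear -b3; lra.
have F4 : 1 * b (o_ 0, o_ 2, o_ 3) + (-1) * b (o_ 0, o_ 4, o_ 5) + 3 * b (o_ 1, o_ 2, o_ 4) + 1 * b (o_ 1, o_ 3, o_ 5) + 1 * b (o_ 2, o_ 3, o_ 6) = 1 by clear -b4; lra.
have F5 : 1 * b (o_ 0, o_ 1, o_ 2) + (-1) * b (o_ 0, o_ 2, o_ 3) + 1 * b (o_ 0, o_ 4, o_ 5) + (-1) * b (o_ 0, o_ 5, o_ 6) + 1 * b (o_ 1, o_ 2, o_ 4) + 3 * b (o_ 1, o_ 3, o_ 5) + 1 * b (o_ 2, o_ 3, o_ 6) = 1 by clear -b5; lra.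
have F6 : (-1) * b (o_ 0, o_ 1, o_ 2) + 1 * b (o_ 0, o_ 5, o_ 6) + 1 * b (o_ 1, o_ 2, o_ 4) + 1 * b (o_ 1, o_ 3, o_ 5) + 3 * b (o_ 2, o_ 3, o_ 6) = 1 by clear -b6; lra.
have GX0 : 3 * x1 + 1 * x3 + 1 * x4 + 1 * x6 + (-1) * x7 = 1 by clear -E0 E1 E2 E3 E4 E5 E6 F0; lra.
have GX1 : 3 * x2 + 1 * x3 + 1 * x4 + 1 * x5 + (-1) * x6 = 1 by clear -E0 E1 E2 E3 E4 E5 E6 F1; lra.
have GX2 : 1 * x1 + 1 * x2 + 3 * x3 + (-1) * x5 + 1 * x6 = 1 by clear -E0 E1 E2 E3 E4 E5 E6 F2; lra.
have GX3 : 1 * x1 + 1 * x2 + 3 * x4 + (-1) * x6 + 1 * x7 = 1 by clear -E0 E1 E2 E3 E4 E5 E6 F3; lra.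
have GX4 : 1 * x2 + (-1) * x3 + 3 * x5 + 1 * x6 + 1 * x7 = 1 by clear -E0 E1 E2 E3 E4 E5 E6 F4; lra.
have GX5 : 1 * x1 + (-1) * x2 + 1 * x3 + (-1) * x4 + 1 * x5 + 3 * x6 + 1 * x7 = 1 by clear -E0 E1 E2 E3 E4 E5 E6 F5; lra.
have GX6 : (-1) * x1 + 1 * x4 + 1 * x5 + 1 * x6 + 3 * x7 = 1 by clear -E0 E1 E2 E3 E4 E5 E6 F6; lra.
have L3 : x3 = (2/5) + 0 * x1 + (-1) * x2 by clear -GX0 GX1 GX2 GX3 GX4 GX5 GX6; lra.
have L4 : x4 = (2/5) + (-1) * x1 + 0 * x2 by clear -GX0 GX1 GX2 GX3 GX4 GX5 GX6; lra.
have L5 : x5 = (2/5) + 0 * x1 + (-1) * x2 by clear -GX0 GX1 GX2 GX3 GX4 GX5 GX6; lra.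
have L6 : x6 = (1/5) + (-1) * x1 + 1 * x2 by clear -GX0 GX1 GX2 GX3 GX4 GX5 GX6; lra.
have L7 : x7 = 0 + 1 * x1 + 0 * x2 by clear -GX0 GX1 GX2 GX3 GX4 GX5 GX6; lra.
rewrite L3 L4 L5 L6 L7 in P1 P2.
have gnz' := @gnz' R g gnz.
apply: (@sig_decide R g [seq gn R g n < 0 | n <- iota 0 7] SigL1).
  by move=> i; rewrite (nth_map 0%N) ?size_iota // nth_iota // add0n gn_val.
have Hq : x2 = 2/5 - x1 by clear -P1 P2; nra.
rewrite Hq in P2.
have Hp : (x1 - 1/5) * (x1 - 6/5) = 0 by clear -P2; nra.
move/eqP: Hp; rewrite mulf_eq0 !subr_eq0 => /orP[/eqP p1|/eqP p1].
apply: key1_0.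
  - apply: sgn_pos (gnz' 0) (gnz' 1) _; rewrite -/x1; clear -p1 Hq L3 L4 L5 L6 L7; lra.
  - apply: sgn_pos (gnz' 0) (gnz' 2) _; rewrite -/x2; clear -p1 Hq L3 L4 L5 L6 L7; lra.
  - apply: sgn_pos (gnz' 0) (gnz' 4) _; rewrite -/x3; clear -p1 Hq L3 L4 L5 L6 L7; lra.
  - apply: sgn_pos (gnz' 0) (gnz' 5) _; rewrite -/x4; clear -p1 Hq L3 L4 L5 L6 L7; lra.
  - apply: sgn_pos (gnz' 1) (gnz' 2) _; rewrite -/x5; clear -p1 Hq L3 L4 L5 L6 L7; lra.
  - apply: sgn_pos (gnz' 1) (gnz' 3) _; rewrite -/x6; clear -p1 Hq L3 L4 L5 L6 L7; lra.
  - apply: sgn_pos (gnz' 2) (gnz' 3) _; rewrite -/x7; clear -p1 Hq L3 L4 L5 L6 L7; lra.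
apply: key1_1.
  - apply: sgn_pos (gnz' 0) (gnz' 1) _; rewrite -/x1; clear -p1 Hq L3 L4 L5 L6 L7; lra.
  - apply: sgn_neg (gnz' 0) (gnz' 2) _; rewrite -/x2; clear -p1 Hq L3 L4 L5 L6 L7; lra.
  - apply: sgn_pos (gnz' 0) (gnz' 4) _; rewrite -/x3; clear -p1 Hq L3 L4 L5 L6 L7; lra.
  - apply: sgn_neg (gnz' 0) (gnz' 5) _; rewrite -/x4; clear -p1 Hq L3 L4 L5 L6 L7; lra.
  - apply: sgn_pos (gnz' 1) (gnz' 2) _; rewrite -/x5; clear -p1 Hq L3 L4 L5 L6 L7; lra.
  - apply: sgn_neg (gnz' 1) (gnz' 3) _; rewrite -/x6; clear -p1 Hq L3 L4 L5 L6 L7; lra.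
  - apply: sgn_pos (gnz' 2) (gnz' 3) _; rewrite -/x7; clear -p1 Hq L3 L4 L5 L6 L7; lra.
Qed.
Lemma nik1 (R : realType) : nik_diag (@sc_of R 7 D1) (fun l : 'I_7 => nth 0 ([:: (1/5); (2/5); (3/5); (4/5); 1; (6/5); (7/5)] : seq R) l).
Proof.
have SD := fun F => @sumDelta R D1 DL1 DLo1 F c1D c1b c1o c1u.
have MD := fun t => @memDelta R D1 DL1 DLo1 t c1D c1b c1o.
  exists (fun t => nth 0 ([:: 0; (-(1/5)); (3/5); (2/5); (3/5); 0; 0] : seq R) (index t DLo1)); split.
    move=> t; rewrite MD; move: t; apply: allP_prop; rewrite /=.
    repeat match goal with |- _ /\ _ => split | |- True => exact I end; rewrite SD !big_cons big_nil !sum7 /rootrow /=; lra.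
  move=> l; move: l; apply: ord7; rewrite SD !big_cons big_nil /rootrow /=; lra.
Qed.
Lemma ex1_0 (R : realType) : is_sig (@sc_of R 7 D1) (sig_of 7 [:: ]%N).
Proof.
pose gl : seq R := [:: 5; 1; 1; 1; (1/5); (1/5); (1/5)].
exists (fun i : 'I_7 => nth 0 gl i).
have gnz : forall i : 'I_7, nth 0 gl i != 0.
  apply: ord7.
  by apply: lt0r_neq0; rewrite /gl /=; lra.
  by apply: lt0r_neq0; rewrite /gl /=; lra.
  by apply: lt0r_neq0; rewrite /gl /=; lra.
  by apply: lt0r_neq0; rewrite /gl /=; lra.
  by apply: lt0r_neq0; rewrite /gl /=; lra.
  by apply: lt0r_neq0; rewrite /gl /=; lra.
  by apply: lt0r_neq0; rewrite /gl /=; lra.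
have RE := @RicE' R D1 DL1 _ gnz c1R c1b.
have SD := fun F => @sumDelta R D1 DL1 DLo1 F c1D c1b c1o c1u.
have MD := fun t => @memDelta R D1 DL1 DLo1 t c1D c1b c1o.
split => //; split.
  rewrite /signature /sig_of; apply/setP; apply: ord7; rewrite !inE /=.
  by apply: ltb_false; rewrite /gl /=; lra.
  by apply: ltb_false; rewrite /gl /=; lra.
  by apply: ltb_false; rewrite /gl /=; lra.
  by apply: ltb_false; rewrite /gl /=; lra.
  by apply: ltb_false; rewrite /gl /=; lra.
  by apply: ltb_false; rewrite /gl /=; lra.
  by apply: ltb_false; rewrite /gl /=; lra.
exists (fun l : 'I_7 => nth 0 ([:: (1/5); (2/5); (3/5); (4/5); 1; (6/5); (7/5)] : seq R) l); split; first exact: nik1.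
move=> p q; rewrite RE; case: (eqVneq p q) => [_|_] //; move: p; apply: ord7;
  rewrite !big_cons big_nil /MiR /Xg /= !gnE //= /gl /=; by field.
Qed.
Lemma ex1_1 (R : realType) : is_sig (@sc_of R 7 D1) (sig_of 7 [:: 1; 2; 4; 5; 7]%N).
Proof.
pose gl : seq R := [:: (-5); (-1); 1; (-1); (-(1/5)); (1/5); (-(1/5))].
exists (fun i : 'I_7 => nth 0 gl i).
have gnz : forall i : 'I_7, nth 0 gl i != 0.
  apply: ord7.
  by apply: ltr0_neq0; rewrite /gl /=; lra.
  by apply: ltr0_neq0; rewrite /gl /=; lra.
  by apply: lt0r_neq0; rewrite /gl /=; lra.
  by apply: ltr0_neq0; rewrite /gl /=; lra.
  by apply: ltr0_neq0; rewrite /gl /=; lra.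
  by apply: lt0r_neq0; rewrite /gl /=; lra.
  by apply: ltr0_neq0; rewrite /gl /=; lra.
have RE := @RicE' R D1 DL1 _ gnz c1R c1b.
have SD := fun F => @sumDelta R D1 DL1 DLo1 F c1D c1b c1o c1u.
have MD := fun t => @memDelta R D1 DL1 DLo1 t c1D c1b c1o.
split => //; split.
  rewrite /signature /sig_of; apply/setP; apply: ord7; rewrite !inE /=.
  by apply: ltb_true; rewrite /gl /=; lra.
  by apply: ltb_true; rewrite /gl /=; lra.
  by apply: ltb_false; rewrite /gl /=; lra.
  by apply: ltb_true; rewrite /gl /=; lra.
  by apply: ltb_true; rewrite /gl /=; lra.
  by apply: ltb_false; rewrite /gl /=; lra.
  by apply: ltb_true; rewrite /gl /=; lra.
exists (fun l : 'I_7 => nth 0 ([:: (1/5); (2/5); (3/5); (4/5); 1; (6/5); (7/5)] : seq R) l); split; first exact: nik1.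
move=> p q; rewrite RE; case: (eqVneq p q) => [_|_] //; move: p; apply: ord7;
  rewrite !big_cons big_nil /MiR /Xg /= !gnE //= /gl /=; by field.
Qed.
Lemma ex1_2 (R : realType) : is_sig (@sc_of R 7 D1) (sig_of 7 [:: 1; 3; 5; 7]%N).
Proof.
pose gl : seq R := [:: (-5); 1; (-1); 1; (-(1/5)); (1/5); (-(1/5))].
exists (fun i : 'I_7 => nth 0 gl i).
have gnz : forall i : 'I_7, nth 0 gl i != 0.
  apply: ord7.
  by apply: ltr0_neq0; rewrite /gl /=; lra.
  by apply: lt0r_neq0; rewrite /gl /=; lra.
  by apply: ltr0_neq0; rewrite /gl /=; lra.
  by apply: lt0r_neq0; rewrite /gl /=; lra.
  by apply: ltr0_neq0; rewrite /gl /=; lra.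
  by apply: lt0r_neq0; rewrite /gl /=; lra.
  by apply: ltr0_neq0; rewrite /gl /=; lra.
have RE := @RicE' R D1 DL1 _ gnz c1R c1b.
have SD := fun F => @sumDelta R D1 DL1 DLo1 F c1D c1b c1o c1u.
have MD := fun t => @memDelta R D1 DL1 DLo1 t c1D c1b c1o.
split => //; split.
  rewrite /signature /sig_of; apply/setP; apply: ord7; rewrite !inE /=.
  by apply: ltb_true; rewrite /gl /=; lra.
  by apply: ltb_false; rewrite /gl /=; lra.
  by apply: ltb_true; rewrite /gl /=; lra.
  by apply: ltb_false; rewrite /gl /=; lra.
  by apply: ltb_true; rewrite /gl /=; lra.
  by apply: ltb_false; rewrite /gl /=; lra.
  by apply: ltb_true; rewrite /gl /=; lra.
exists (fun l : 'I_7 => nth 0 ([:: (1/5); (2/5); (3/5); (4/5); 1; (6/5); (7/5)] : seq R) l); split; first exact: nik1.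
move=> p q; rewrite RE; case: (eqVneq p q) => [_|_] //; move: p; apply: ord7;
  rewrite !big_cons big_nil /MiR /Xg /= !gnE //= /gl /=; by field.
Qed.
Lemma ex1_3 (R : realType) : is_sig (@sc_of R 7 D1) (sig_of 7 [:: 2; 3; 4]%N).
Proof.
pose gl : seq R := [:: 5; (-1); (-1); (-1); (1/5); (1/5); (1/5)].
exists (fun i : 'I_7 => nth 0 gl i).
have gnz : forall i : 'I_7, nth 0 gl i != 0.
  apply: ord7.
  by apply: lt0r_neq0; rewrite /gl /=; lra.
  by apply: ltr0_neq0; rewrite /gl /=; lra.
  by apply: ltr0_neq0; rewrite /gl /=; lra.
  by apply: ltr0_neq0; rewrite /gl /=; lra.
  by apply: lt0r_neq0; rewrite /gl /=; lra.
  by apply: lt0r_neq0; rewrite /gl /=; lra.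
  by apply: lt0r_neq0; rewrite /gl /=; lra.
have RE := @RicE' R D1 DL1 _ gnz c1R c1b.
have SD := fun F => @sumDelta R D1 DL1 DLo1 F c1D c1b c1o c1u.
have MD := fun t => @memDelta R D1 DL1 DLo1 t c1D c1b c1o.
split => //; split.
  rewrite /signature /sig_of; apply/setP; apply: ord7; rewrite !inE /=.
  by apply: ltb_false; rewrite /gl /=; lra.
  by apply: ltb_true; rewrite /gl /=; lra.
  by apply: ltb_true; rewrite /gl /=; lra.
  by apply: ltb_true; rewrite /gl /=; lra.
  by apply: ltb_false; rewrite /gl /=; lra.
  by apply: ltb_false; rewrite /gl /=; lra.
  by apply: ltb_false; rewrite /gl /=; lra.
exists (fun l : 'I_7 => nth 0 ([:: (1/5); (2/5); (3/5); (4/5); 1; (6/5); (7/5)] : seq R) l); split; first exact: nik1.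
move=> p q; rewrite RE; case: (eqVneq p q) => [_|_] //; move: p; apply: ord7;
  rewrite !big_cons big_nil /MiR /Xg /= !gnE //= /gl /=; by field.
Qed.
Lemma ex1_4 (R : realType) : is_sig (@sc_of R 7 D1) (sig_of 7 [:: 1; 2; 5]%N).
Proof.
pose gl : seq R := [:: (-(5/4)); (-(2/3)); 1; 1; (-(4/5)); (6/5); (6/5)].
exists (fun i : 'I_7 => nth 0 gl i).
have gnz : forall i : 'I_7, nth 0 gl i != 0.
  apply: ord7.
  by apply: ltr0_neq0; rewrite /gl /=; lra.
  by apply: ltr0_neq0; rewrite /gl /=; lra.
  by apply: lt0r_neq0; rewrite /gl /=; lra.
  by apply: lt0r_neq0; rewrite /gl /=; lra.
  by apply: ltr0_neq0; rewrite /gl /=; lra.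
  by apply: lt0r_neq0; rewrite /gl /=; lra.
  by apply: lt0r_neq0; rewrite /gl /=; lra.
have RE := @RicE' R D1 DL1 _ gnz c1R c1b.
have SD := fun F => @sumDelta R D1 DL1 DLo1 F c1D c1b c1o c1u.
have MD := fun t => @memDelta R D1 DL1 DLo1 t c1D c1b c1o.
split => //; split.
  rewrite /signature /sig_of; apply/setP; apply: ord7; rewrite !inE /=.
  by apply: ltb_true; rewrite /gl /=; lra.
  by apply: ltb_true; rewrite /gl /=; lra.
  by apply: ltb_false; rewrite /gl /=; lra.
  by apply: ltb_false; rewrite /gl /=; lra.
  by apply: ltb_true; rewrite /gl /=; lra.
  by apply: ltb_false; rewrite /gl /=; lra.
  by apply: ltb_false; rewrite /gl /=; lra.
exists (fun l : 'I_7 => nth 0 ([:: (1/5); (2/5); (3/5); (4/5); 1; (6/5); (7/5)] : seq R) l); split; first exact: nik1.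
move=> p q; rewrite RE; case: (eqVneq p q) => [_|_] //; move: p; apply: ord7;
  rewrite !big_cons big_nil /MiR /Xg /= !gnE //= /gl /=; by field.
Qed.
Lemma ex1_5 (R : realType) : is_sig (@sc_of R 7 D1) (sig_of 7 [:: 1; 3; 4; 5]%N).
Proof.
pose gl : seq R := [:: (-(5/4)); (2/3); (-1); (-1); (-(4/5)); (6/5); (6/5)].
exists (fun i : 'I_7 => nth 0 gl i).
have gnz : forall i : 'I_7, nth 0 gl i != 0.
  apply: ord7.
  by apply: ltr0_neq0; rewrite /gl /=; lra.
  by apply: lt0r_neq0; rewrite /gl /=; lra.
  by apply: ltr0_neq0; rewrite /gl /=; lra.
  by apply: ltr0_neq0; rewrite /gl /=; lra.
  by apply: ltr0_neq0; rewrite /gl /=; lra.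
  by apply: lt0r_neq0; rewrite /gl /=; lra.
  by apply: lt0r_neq0; rewrite /gl /=; lra.
have RE := @RicE' R D1 DL1 _ gnz c1R c1b.
have SD := fun F => @sumDelta R D1 DL1 DLo1 F c1D c1b c1o c1u.
have MD := fun t => @memDelta R D1 DL1 DLo1 t c1D c1b c1o.
split => //; split.
  rewrite /signature /sig_of; apply/setP; apply: ord7; rewrite !inE /=.
  by apply: ltb_true; rewrite /gl /=; lra.
  by apply: ltb_false; rewrite /gl /=; lra.
  by apply: ltb_true; rewrite /gl /=; lra.
  by apply: ltb_true; rewrite /gl /=; lra.
  by apply: ltb_true; rewrite /gl /=; lra.
  by apply: ltb_false; rewrite /gl /=; lra.
  by apply: ltb_false; rewrite /gl /=; lra.
exists (fun l : 'I_7 => nth 0 ([:: (1/5); (2/5); (3/5); (4/5); 1; (6/5); (7/5)] : seq R) l); split; first exact: nik1.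
move=> p q; rewrite RE; case: (eqVneq p q) => [_|_] //; move: p; apply: ord7;
  rewrite !big_cons big_nil /MiR /Xg /= !gnE //= /gl /=; by field.
Qed.
Lemma ex1_6 (R : realType) : is_sig (@sc_of R 7 D1) (sig_of 7 [:: 2; 3; 7]%N).
Proof.
pose gl : seq R := [:: (5/4); (-(2/3)); (-1); 1; (4/5); (6/5); (-(6/5))].
exists (fun i : 'I_7 => nth 0 gl i).
have gnz : forall i : 'I_7, nth 0 gl i != 0.
  apply: ord7.
  by apply: lt0r_neq0; rewrite /gl /=; lra.
  by apply: ltr0_neq0; rewrite /gl /=; lra.
  by apply: ltr0_neq0; rewrite /gl /=; lra.
  by apply: lt0r_neq0; rewrite /gl /=; lra.
  by apply: lt0r_neq0; rewrite /gl /=; lra.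
  by apply: lt0r_neq0; rewrite /gl /=; lra.
  by apply: ltr0_neq0; rewrite /gl /=; lra.
have RE := @RicE' R D1 DL1 _ gnz c1R c1b.
have SD := fun F => @sumDelta R D1 DL1 DLo1 F c1D c1b c1o c1u.
have MD := fun t => @memDelta R D1 DL1 DLo1 t c1D c1b c1o.
split => //; split.
  rewrite /signature /sig_of; apply/setP; apply: ord7; rewrite !inE /=.
  by apply: ltb_false; rewrite /gl /=; lra.
  by apply: ltb_true; rewrite /gl /=; lra.
  by apply: ltb_true; rewrite /gl /=; lra.
  by apply: ltb_false; rewrite /gl /=; lra.
  by apply: ltb_false; rewrite /gl /=; lra.
  by apply: ltb_false; rewrite /gl /=; lra.
  by apply: ltb_true; rewrite /gl /=; lra.
exists (fun l : 'I_7 => nth 0 ([:: (1/5); (2/5); (3/5); (4/5); 1; (6/5); (7/5)] : seq R) l); split; first exact: nik1.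
move=> p q; rewrite RE; case: (eqVneq p q) => [_|_] //; move: p; apply: ord7;
  rewrite !big_cons big_nil /MiR /Xg /= !gnE //= /gl /=; by field.
Qed.
Lemma ex1_7 (R : realType) : is_sig (@sc_of R 7 D1) (sig_of 7 [:: 4; 7]%N).
Proof.
pose gl : seq R := [:: (5/4); (2/3); 1; (-1); (4/5); (6/5); (-(6/5))].
exists (fun i : 'I_7 => nth 0 gl i).
have gnz : forall i : 'I_7, nth 0 gl i != 0.
  apply: ord7.
  by apply: lt0r_neq0; rewrite /gl /=; lra.
  by apply: lt0r_neq0; rewrite /gl /=; lra.
  by apply: lt0r_neq0; rewrite /gl /=; lra.
  by apply: ltr0_neq0; rewrite /gl /=; lra.
  by apply: lt0r_neq0; rewrite /gl /=; lra.
  by apply: lt0r_neq0; rewrite /gl /=; lra.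
  by apply: ltr0_neq0; rewrite /gl /=; lra.
have RE := @RicE' R D1 DL1 _ gnz c1R c1b.
have SD := fun F => @sumDelta R D1 DL1 DLo1 F c1D c1b c1o c1u.
have MD := fun t => @memDelta R D1 DL1 DLo1 t c1D c1b c1o.
split => //; split.
  rewrite /signature /sig_of; apply/setP; apply: ord7; rewrite !inE /=.
  by apply: ltb_false; rewrite /gl /=; lra.
  by apply: ltb_false; rewrite /gl /=; lra.
  by apply: ltb_false; rewrite /gl /=; lra.
  by apply: ltb_true; rewrite /gl /=; lra.
  by apply: ltb_false; rewrite /gl /=; lra.
  by apply: ltb_false; rewrite /gl /=; lra.
  by apply: ltb_true; rewrite /gl /=; lra.
exists (fun l : 'I_7 => nth 0 ([:: (1/5); (2/5); (3/5); (4/5); 1; (6/5); (7/5)] : seq R) l); split; first exact: nik1.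
move=> p q; rewrite RE; case: (eqVneq p q) => [_|_] //; move: p; apply: ord7;
  rewrite !big_cons big_nil /MiR /Xg /= !gnE //= /gl /=; by field.
Qed.
Lemma part1 (R : realType) : forall S : {set 'I_7},
  is_sig (@sc_of R 7 D1) S <-> S \in [:: sig_of 7 [:: ]%N; sig_of 7 [:: 1; 2; 4; 5; 7]%N; sig_of 7 [:: 1; 3; 5; 7]%N; sig_of 7 [:: 2; 3; 4]%N; sig_of 7 [:: 1; 2; 5]%N; sig_of 7 [:: 1; 3; 4; 5]%N; sig_of 7 [:: 2; 3; 7]%N; sig_of 7 [:: 4; 7]%N]%N.
Proof.
move=> S; split.
  move=> [g [gnz [HS Hr]]]; rewrite -HS; exact: (@fwd1 R g gnz Hr).
move: S; apply: allP_prop; rewrite /=.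
split; first exact: ex1_0; split; first exact: ex1_1; split; first exact: ex1_2; split; first exact: ex1_3; split; first exact: ex1_4; split; first exact: ex1_5; split; first exact: ex1_6; split; first exact: ex1_7; done.
Qed.


Definition DL2 : seq (nat * nat * nat) := [:: (0,1,3); (0,3,4); (0,4,5); (0,5,6); (1,2,4); (2,3,5); (2,4,6)]%N.
Definition DLo2 : seq ('I_7 * 'I_7 * 'I_7) := [:: (o_ 0, o_ 1, o_ 3); (o_ 0, o_ 3, o_ 4); (o_ 0, o_ 4, o_ 5); (o_ 0, o_ 5, o_ 6); (o_ 1, o_ 2, o_ 4); (o_ 2, o_ 3, o_ 5); (o_ 2, o_ 4, o_ 6)].
Lemma c2R : checkRic D2 DL2. Proof. by vm_compute. Qed.
Lemma c2D : checkDelta D2 DL2. Proof. by vm_compute. Qed.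
Lemma c2b : all bnd DL2. Proof. by []. Qed.
Lemma c2o : DLo2 = map tri DL2.
Proof. rewrite /DLo2 /= /tri /=; by repeat f_equal; apply/val_inj; rewrite /= inordK. Qed.
Lemma c2u : uniq DLo2. Proof. by vm_compute. Qed.

Definition SigL2 : seq (seq nat) := [:: [:: ]; [:: 1; 2; 5; 7]; [:: 1; 4; 6]; [:: 2; 4; 5; 6; 7]; [:: 1; 2; 3; 4; 6; 7]; [:: 1; 3; 5]; [:: 2; 3; 7]; [:: 3; 4; 5; 6]]%N.

Lemma key2_0 : forall s0 s1 s2 s3 s4 s5 s6 : bool,
  s3 = (s0 (+) s1) -> s4 = (s0 (+) s3) -> s5 = (s0 (+) s4) -> s6 = (s0 (+) s5) -> s4 = (s1 (+) s2) -> s5 = (s2 (+) s3) -> s6 = (s2 (+) s4) ->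
  has (fun l => all (fun i => nth false [:: s0; s1; s2; s3; s4; s5; s6] i == (i.+1 \in l)) (iota 0 7)) SigL2.
Proof. by case; case; case; case; case; case; case. Qed.

Lemma key2_1 : forall s0 s1 s2 s3 s4 s5 s6 : bool,
  s3 = ~~ (s0 (+) s1) -> s4 = (s0 (+) s3) -> s5 = (s0 (+) s4) -> s6 = ~~ (s0 (+) s5) -> s4 = (s1 (+) s2) -> s5 = ~~ (s2 (+) s3) -> s6 = (s2 (+) s4) ->
  has (fun l => all (fun i => nth false [:: s0; s1; s2; s3; s4; s5; s6] i == (i.+1 \in l)) (iota 0 7)) SigL2.
Proof. by case; case; case; case; case; case; case. Qed.

Lemma fwd2 (R : realType) (g : 'I_7 -> R) : (forall i, g i != 0) -> ric_nik (@sc_of R 7 D2) g ->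
  [set i | g i < 0] \in map (sig_of 7) SigL2.
Proof.
move=> gnz [v [[b [Hb Hv]] HR]].
have RE := @RicE' R D2 DL2 g gnz c2R c2b.
have SD := fun F => @sumDelta R D2 DL2 DLo2 F c2D c2b c2o c2u.
have MD := fun t => @memDelta R D2 DL2 DLo2 t c2D c2b c2o.
have r0 := HR (o_ 0) (o_ 0); rewrite RE eqxx !big_cons big_nil /MiR /Xg /= in r0.
have r1 := HR (o_ 1) (o_ 1); rewrite RE eqxx !big_cons big_nil /MiR /Xg /= in r1.
have r2 := HR (o_ 2) (o_ 2); rewrite RE eqxx !big_cons big_nil /MiR /Xg /= in r2.
have r3 := HR (o_ 3) (o_ 3); rewrite RE eqxx !big_cons big_nil /MiR /Xg /= in r3.
have r4 := HR (o_ 4) (o_ 4); rewrite RE eqxx !big_cons big_nil /MiR /Xg /= in r4.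
have r5 := HR (o_ 5) (o_ 5); rewrite RE eqxx !big_cons big_nil /MiR /Xg /= in r5.
have r6 := HR (o_ 6) (o_ 6); rewrite RE eqxx !big_cons big_nil /MiR /Xg /= in r6.
have v0 := Hv (o_ 0); rewrite SD !big_cons big_nil /rootrow /= in v0.
have v1 := Hv (o_ 1); rewrite SD !big_cons big_nil /rootrow /= in v1.
have v2 := Hv (o_ 2); rewrite SD !big_cons big_nil /rootrow /= in v2.
have v3 := Hv (o_ 3); rewrite SD !big_cons big_nil /rootrow /= in v3.
have v4 := Hv (o_ 4); rewrite SD !big_cons big_nil /rootrow /= in v4.
have v5 := Hv (o_ 5); rewrite SD !big_cons big_nil /rootrow /= in v5.
have v6 := Hv (o_ 6); rewrite SD !big_cons big_nil /rootrow /= in v6.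
have b0 := Hb (o_ 0, o_ 1, o_ 3); rewrite MD SD !big_cons big_nil !sum7 /rootrow /= in b0.
have b1 := Hb (o_ 0, o_ 3, o_ 4); rewrite MD SD !big_cons big_nil !sum7 /rootrow /= in b1.
have b2 := Hb (o_ 0, o_ 4, o_ 5); rewrite MD SD !big_cons big_nil !sum7 /rootrow /= in b2.
have b3 := Hb (o_ 0, o_ 5, o_ 6); rewrite MD SD !big_cons big_nil !sum7 /rootrow /= in b3.
have b4 := Hb (o_ 1, o_ 2, o_ 4); rewrite MD SD !big_cons big_nil !sum7 /rootrow /= in b4.
have b5 := Hb (o_ 2, o_ 3, o_ 5); rewrite MD SD !big_cons big_nil !sum7 /rootrow /= in b5.
have b6 := Hb (o_ 2, o_ 4, o_ 6); rewrite MD SD !big_cons big_nil !sum7 /rootrow /= in b6.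
move: {b0}(b0 isT) {b1}(b1 isT) {b2}(b2 isT) {b3}(b3 isT) {b4}(b4 isT) {b5}(b5 isT) {b6}(b6 isT) => b0 b1 b2 b3 b4 b5 b6.
have g0 := gnz (inord 0); have g1 := gnz (inord 1); have g2 := gnz (inord 2);
have g3 := gnz (inord 3); have g4 := gnz (inord 4); have g5 := gnz (inord 5); have g6 := gnz (inord 6).
have P1 : Xg R g (0,5,6)%N * Xg R g (2,3,5)%N = Xg R g (0,3,4)%N * Xg R g (2,4,6)%N.
  rewrite /Xg /gn /=; field; by rewrite ?g0 ?g1 ?g2 ?g3 ?g4 ?g5 ?g6.
have P2 : Xg R g (0,4,5)%N * Xg R g (1,2,4)%N = Xg R g (0,1,3)%N * Xg R g (2,3,5)%N.
  rewrite /Xg /gn /=; field; by rewrite ?g0 ?g1 ?g2 ?g3 ?g4 ?g5 ?g6.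
rewrite /Xg /= in P1 P2.
set x1 := gn R g 3 / (gn R g 0 * gn R g 1) in r0 r1 r2 r3 r4 r5 r6 P1 P2.
set x2 := gn R g 4 / (gn R g 0 * gn R g 3) in r0 r1 r2 r3 r4 r5 r6 P1 P2.
set x3 := gn R g 5 / (gn R g 0 * gn R g 4) in r0 r1 r2 r3 r4 r5 r6 P1 P2.
set x4 := gn R g 6 / (gn R g 0 * gn R g 5) in r0 r1 r2 r3 r4 r5 r6 P1 P2.
set x5 := gn R g 4 / (gn R g 1 * gn R g 2) in r0 r1 r2 r3 r4 r5 r6 P1 P2.
set x6 := gn R g 5 / (gn R g 2 * gn R g 3) in r0 r1 r2 r3 r4 r5 r6 P1 P2.
set x7 := gn R g 6 / (gn R g 2 * gn R g 4) in r0 r1 r2 r3 r4 r5 r6 P1 P2.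
have E0 : (-1) * x1 + (-1) * x2 + (-1) * x3 + (-1) * x4 = (-1) * b (o_ 0, o_ 1, o_ 3) + (-1) * b (o_ 0, o_ 3, o_ 4) + (-1) * b (o_ 0, o_ 4, o_ 5) + (-1) * b (o_ 0, o_ 5, o_ 6) by clear -r0 v0; lra.
have E1 : (-1) * x1 + (-1) * x5 = (-1) * b (o_ 0, o_ 1, o_ 3) + (-1) * b (o_ 1, o_ 2, o_ 4) by clear -r1 v1; lra.
have E2 : (-1) * x5 + (-1) * x6 + (-1) * x7 = (-1) * b (o_ 1, o_ 2, o_ 4) + (-1) * b (o_ 2, o_ 3, o_ 5) + (-1) * b (o_ 2, o_ 4, o_ 6) by clear -r2 v2; lra.
have E3 : 1 * x1 + (-1) * x2 + (-1) * x6 = 1 * b (o_ 0, o_ 1, o_ 3) + (-1) * b (o_ 0, o_ 3, o_ 4) + (-1) * b (o_ 2, o_ 3, o_ 5) by clear -r3 v3; lra.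
have E4 : 1 * x2 + (-1) * x3 + 1 * x5 + (-1) * x7 = 1 * b (o_ 0, o_ 3, o_ 4) + (-1) * b (o_ 0, o_ 4, o_ 5) + 1 * b (o_ 1, o_ 2, o_ 4) + (-1) * b (o_ 2, o_ 4, o_ 6) by clear -r4 v4; lra.
have E5 : 1 * x3 + (-1) * x4 + 1 * x6 = 1 * b (o_ 0, o_ 4, o_ 5) + (-1) * b (o_ 0, o_ 5, o_ 6) + 1 * b (o_ 2, o_ 3, o_ 5) by clear -r5 v5; lra.
have E6 : 1 * x4 + 1 * x7 = 1 * b (o_ 0, o_ 5, o_ 6) + 1 * b (o_ 2, o_ 4, o_ 6) by clear -r6 v6; lra.
have F0 : 3 * b (o_ 0, o_ 1, o_ 3) + 1 * b (o_ 0, o_ 4, o_ 5) + 1 * b (o_ 0, o_ 5, o_ 6) + 1 * b (o_ 1, o_ 2, o_ 4) + (-1) * b (o_ 2, o_ 3, o_ 5) = 1 by clear -b0; lra.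
have F1 : 3 * b (o_ 0, o_ 3, o_ 4) + 1 * b (o_ 0, o_ 5, o_ 6) + 1 * b (o_ 1, o_ 2, o_ 4) + 1 * b (o_ 2, o_ 3, o_ 5) + (-1) * b (o_ 2, o_ 4, o_ 6) = 1 by clear -b1; lra.
have F2 : 1 * b (o_ 0, o_ 1, o_ 3) + 3 * b (o_ 0, o_ 4, o_ 5) + (-1) * b (o_ 1, o_ 2, o_ 4) + 1 * b (o_ 2, o_ 3, o_ 5) + 1 * b (o_ 2, o_ 4, o_ 6) = 1 by clear -b2; lra.
have F3 : 1 * b (o_ 0, o_ 1, o_ 3) + 1 * b (o_ 0, o_ 3, o_ 4) + 3 * b (o_ 0, o_ 5, o_ 6) + (-1) * b (o_ 2, o_ 3, o_ 5) + 1 * b (o_ 2, o_ 4, o_ 6) = 1 by clear -b3; lra.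
have F4 : 1 * b (o_ 0, o_ 1, o_ 3) + 1 * b (o_ 0, o_ 3, o_ 4) + (-1) * b (o_ 0, o_ 4, o_ 5) + 3 * b (o_ 1, o_ 2, o_ 4) + 1 * b (o_ 2, o_ 3, o_ 5) = 1 by clear -b4; lra.
have F5 : (-1) * b (o_ 0, o_ 1, o_ 3) + 1 * b (o_ 0, o_ 3, o_ 4) + 1 * b (o_ 0, o_ 4, o_ 5) + (-1) * b (o_ 0, o_ 5, o_ 6) + 1 * b (o_ 1, o_ 2, o_ 4) + 3 * b (o_ 2, o_ 3, o_ 5) + 1 * b (o_ 2, o_ 4, o_ 6) = 1 by clear -b5; lra.
have F6 : (-1) * b (o_ 0, o_ 3, o_ 4) + 1 * b (o_ 0, o_ 4, o_ 5) + 1 * b (o_ 0, o_ 5, o_ 6) + 1 * b (o_ 2, o_ 3, o_ 5) + 3 * b (o_ 2, o_ 4, o_ 6) = 1 by clear -b6; lra.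
have GX0 : 3 * x1 + 1 * x3 + 1 * x4 + 1 * x5 + (-1) * x6 = 1 by clear -E0 E1 E2 E3 E4 E5 E6 F0; lra.
have GX1 : 3 * x2 + 1 * x4 + 1 * x5 + 1 * x6 + (-1) * x7 = 1 by clear -E0 E1 E2 E3 E4 E5 E6 F1; lra.
have GX2 : 1 * x1 + 3 * x3 + (-1) * x5 + 1 * x6 + 1 * x7 = 1 by clear -E0 E1 E2 E3 E4 E5 E6 F2; lra.
have GX3 : 1 * x1 + 1 * x2 + 3 * x4 + (-1) * x6 + 1 * x7 = 1 by clear -E0 E1 E2 E3 E4 E5 E6 F3; lra.
have GX4 : 1 * x1 + 1 * x2 + (-1) * x3 + 3 * x5 + 1 * x6 = 1 by clear -E0 E1 E2 E3 E4 E5 E6 F4; lra.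
have GX5 : (-1) * x1 + 1 * x2 + 1 * x3 + (-1) * x4 + 1 * x5 + 3 * x6 + 1 * x7 = 1 by clear -E0 E1 E2 E3 E4 E5 E6 F5; lra.
have GX6 : (-1) * x2 + 1 * x3 + 1 * x4 + 1 * x6 + 3 * x7 = 1 by clear -E0 E1 E2 E3 E4 E5 E6 F6; lra.
have L3 : x3 = (2/5) + (-1) * x1 + 0 * x2 by clear -GX0 GX1 GX2 GX3 GX4 GX5 GX6; lra.
have L4 : x4 = (2/5) + 0 * x1 + (-1) * x2 by clear -GX0 GX1 GX2 GX3 GX4 GX5 GX6; lra.
have L5 : x5 = (2/5) + (-1) * x1 + 0 * x2 by clear -GX0 GX1 GX2 GX3 GX4 GX5 GX6; lra.
have L6 : x6 = (1/5) + 1 * x1 + (-1) * x2 by clear -GX0 GX1 GX2 GX3 GX4 GX5 GX6; lra.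
have L7 : x7 = 0 + 0 * x1 + 1 * x2 by clear -GX0 GX1 GX2 GX3 GX4 GX5 GX6; lra.
rewrite L3 L4 L5 L6 L7 in P1 P2.
have gnz' := @gnz' R g gnz.
apply: (@sig_decide R g [seq gn R g n < 0 | n <- iota 0 7] SigL2).
  by move=> i; rewrite (nth_map 0%N) ?size_iota // nth_iota // add0n gn_val.
have Hq : x1 = 2/5 - x2 by clear -P1 P2; nra.
rewrite Hq in P1.
have Hp : (x2 - 1/5) * (x2 - 6/5) = 0 by clear -P1; nra.
move/eqP: Hp; rewrite mulf_eq0 !subr_eq0 => /orP[/eqP p1|/eqP p1].
apply: key2_0.
  - apply: sgn_pos (gnz' 0) (gnz' 1) _; rewrite -/x1; clear -p1 Hq L3 L4 L5 L6 L7; lra.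
  - apply: sgn_pos (gnz' 0) (gnz' 3) _; rewrite -/x2; clear -p1 Hq L3 L4 L5 L6 L7; lra.
  - apply: sgn_pos (gnz' 0) (gnz' 4) _; rewrite -/x3; clear -p1 Hq L3 L4 L5 L6 L7; lra.
  - apply: sgn_pos (gnz' 0) (gnz' 5) _; rewrite -/x4; clear -p1 Hq L3 L4 L5 L6 L7; lra.
  - apply: sgn_pos (gnz' 1) (gnz' 2) _; rewrite -/x5; clear -p1 Hq L3 L4 L5 L6 L7; lra.
  - apply: sgn_pos (gnz' 2) (gnz' 3) _; rewrite -/x6; clear -p1 Hq L3 L4 L5 L6 L7; lra.
  - apply: sgn_pos (gnz' 2) (gnz' 4) _; rewrite -/x7; clear -p1 Hq L3 L4 L5 L6 L7; lra.
apply: key2_1.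
  - apply: sgn_neg (gnz' 0) (gnz' 1) _; rewrite -/x1; clear -p1 Hq L3 L4 L5 L6 L7; lra.
  - apply: sgn_pos (gnz' 0) (gnz' 3) _; rewrite -/x2; clear -p1 Hq L3 L4 L5 L6 L7; lra.
  - apply: sgn_pos (gnz' 0) (gnz' 4) _; rewrite -/x3; clear -p1 Hq L3 L4 L5 L6 L7; lra.
  - apply: sgn_neg (gnz' 0) (gnz' 5) _; rewrite -/x4; clear -p1 Hq L3 L4 L5 L6 L7; lra.
  - apply: sgn_pos (gnz' 1) (gnz' 2) _; rewrite -/x5; clear -p1 Hq L3 L4 L5 L6 L7; lra.
  - apply: sgn_neg (gnz' 2) (gnz' 3) _; rewrite -/x6; clear -p1 Hq L3 L4 L5 L6 L7; lra.
  - apply: sgn_pos (gnz' 2) (gnz' 4) _; rewrite -/x7; clear -p1 Hq L3 L4 L5 L6 L7; lra.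
Qed.
Lemma nik2 (R : realType) : nik_diag (@sc_of R 7 D2) (fun l : 'I_7 => nth 0 ([:: (1/5); (3/5); (2/5); (4/5); 1; (6/5); (7/5)] : seq R) l).
Proof.
have SD := fun F => @sumDelta R D2 DL2 DLo2 F c2D c2b c2o c2u.
have MD := fun t => @memDelta R D2 DL2 DLo2 t c2D c2b c2o.
  exists (fun t => nth 0 ([:: (-(1/5)); 0; (3/5); (2/5); (3/5); 0; 0] : seq R) (index t DLo2)); split.
    move=> t; rewrite MD; move: t; apply: allP_prop; rewrite /=.
    repeat match goal with |- _ /\ _ => split | |- True => exact I end; rewrite SD !big_cons big_nil !sum7 /rootrow /=; lra.
  move=> l; move: l; apply: ord7; rewrite SD !big_cons big_nil /rootrow /=; lra.
Qed.
Lemma ex2_0 (R : realType) : is_sig (@sc_of R 7 D2) (sig_of 7 [:: ]%N).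
Proof.
pose gl : seq R := [:: 5; (1/5); 5; (1/5); (1/5); (1/5); (1/5)].
exists (fun i : 'I_7 => nth 0 gl i).
have gnz : forall i : 'I_7, nth 0 gl i != 0.
  apply: ord7.
  by apply: lt0r_neq0; rewrite /gl /=; lra.
  by apply: lt0r_neq0; rewrite /gl /=; lra.
  by apply: lt0r_neq0; rewrite /gl /=; lra.
  by apply: lt0r_neq0; rewrite /gl /=; lra.
  by apply: lt0r_neq0; rewrite /gl /=; lra.
  by apply: lt0r_neq0; rewrite /gl /=; lra.
  by apply: lt0r_neq0; rewrite /gl /=; lra.
have RE := @RicE' R D2 DL2 _ gnz c2R c2b.
have SD := fun F => @sumDelta R D2 DL2 DLo2 F c2D c2b c2o c2u.
have MD := fun t => @memDelta R D2 DL2 DLo2 t c2D c2b c2o.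
split => //; split.
  rewrite /signature /sig_of; apply/setP; apply: ord7; rewrite !inE /=.
  by apply: ltb_false; rewrite /gl /=; lra.
  by apply: ltb_false; rewrite /gl /=; lra.
  by apply: ltb_false; rewrite /gl /=; lra.
  by apply: ltb_false; rewrite /gl /=; lra.
  by apply: ltb_false; rewrite /gl /=; lra.
  by apply: ltb_false; rewrite /gl /=; lra.
  by apply: ltb_false; rewrite /gl /=; lra.
exists (fun l : 'I_7 => nth 0 ([:: (1/5); (3/5); (2/5); (4/5); 1; (6/5); (7/5)] : seq R) l); split; first exact: nik2.
move=> p q; rewrite RE; case: (eqVneq p q) => [_|_] //; move: p; apply: ord7;
  rewrite !big_cons big_nil /MiR /Xg /= !gnE //= /gl /=; by field.
Qed.
Lemma ex2_1 (R : realType) : is_sig (@sc_of R 7 D2) (sig_of 7 [:: 1; 2; 5; 7]%N).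
Proof.
pose gl : seq R := [:: (-5); (-(1/5)); 5; (1/5); (-(1/5)); (1/5); (-(1/5))].
exists (fun i : 'I_7 => nth 0 gl i).
have gnz : forall i : 'I_7, nth 0 gl i != 0.
  apply: ord7.
  by apply: ltr0_neq0; rewrite /gl /=; lra.
  by apply: ltr0_neq0; rewrite /gl /=; lra.
  by apply: lt0r_neq0; rewrite /gl /=; lra.
  by apply: lt0r_neq0; rewrite /gl /=; lra.
  by apply: ltr0_neq0; rewrite /gl /=; lra.
  by apply: lt0r_neq0; rewrite /gl /=; lra.
  by apply: ltr0_neq0; rewrite /gl /=; lra.
have RE := @RicE' R D2 DL2 _ gnz c2R c2b.
have SD := fun F => @sumDelta R D2 DL2 DLo2 F c2D c2b c2o c2u.
have MD := fun t => @memDelta R D2 DL2 DLo2 t c2D c2b c2o.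
split => //; split.
  rewrite /signature /sig_of; apply/setP; apply: ord7; rewrite !inE /=.
  by apply: ltb_true; rewrite /gl /=; lra.
  by apply: ltb_true; rewrite /gl /=; lra.
  by apply: ltb_false; rewrite /gl /=; lra.
  by apply: ltb_false; rewrite /gl /=; lra.
  by apply: ltb_true; rewrite /gl /=; lra.
  by apply: ltb_false; rewrite /gl /=; lra.
  by apply: ltb_true; rewrite /gl /=; lra.
exists (fun l : 'I_7 => nth 0 ([:: (1/5); (3/5); (2/5); (4/5); 1; (6/5); (7/5)] : seq R) l); split; first exact: nik2.
move=> p q; rewrite RE; case: (eqVneq p q) => [_|_] //; move: p; apply: ord7;
  rewrite !big_cons big_nil /MiR /Xg /= !gnE //= /gl /=; by field.
Qed.
Lemma ex2_2 (R : realType) : is_sig (@sc_of R 7 D2) (sig_of 7 [:: 1; 4; 6]%N).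
Proof.
pose gl : seq R := [:: (-5); (1/5); 5; (-(1/5)); (1/5); (-(1/5)); (1/5)].
exists (fun i : 'I_7 => nth 0 gl i).
have gnz : forall i : 'I_7, nth 0 gl i != 0.
  apply: ord7.
  by apply: ltr0_neq0; rewrite /gl /=; lra.
  by apply: lt0r_neq0; rewrite /gl /=; lra.
  by apply: lt0r_neq0; rewrite /gl /=; lra.
  by apply: ltr0_neq0; rewrite /gl /=; lra.
  by apply: lt0r_neq0; rewrite /gl /=; lra.
  by apply: ltr0_neq0; rewrite /gl /=; lra.
  by apply: lt0r_neq0; rewrite /gl /=; lra.
have RE := @RicE' R D2 DL2 _ gnz c2R c2b.
have SD := fun F => @sumDelta R D2 DL2 DLo2 F c2D c2b c2o c2u.
have MD := fun t => @memDelta R D2 DL2 DLo2 t c2D c2b c2o.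
split => //; split.
  rewrite /signature /sig_of; apply/setP; apply: ord7; rewrite !inE /=.
  by apply: ltb_true; rewrite /gl /=; lra.
  by apply: ltb_false; rewrite /gl /=; lra.
  by apply: ltb_false; rewrite /gl /=; lra.
  by apply: ltb_true; rewrite /gl /=; lra.
  by apply: ltb_false; rewrite /gl /=; lra.
  by apply: ltb_true; rewrite /gl /=; lra.
  by apply: ltb_false; rewrite /gl /=; lra.
exists (fun l : 'I_7 => nth 0 ([:: (1/5); (3/5); (2/5); (4/5); 1; (6/5); (7/5)] : seq R) l); split; first exact: nik2.
move=> p q; rewrite RE; case: (eqVneq p q) => [_|_] //; move: p; apply: ord7;
  rewrite !big_cons big_nil /MiR /Xg /= !gnE //= /gl /=; by field.
Qed.
Lemma ex2_3 (R : realType) : is_sig (@sc_of R 7 D2) (sig_of 7 [:: 2; 4; 5; 6; 7]%N).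
Proof.
pose gl : seq R := [:: 5; (-(1/5)); 5; (-(1/5)); (-(1/5)); (-(1/5)); (-(1/5))].
exists (fun i : 'I_7 => nth 0 gl i).
have gnz : forall i : 'I_7, nth 0 gl i != 0.
  apply: ord7.
  by apply: lt0r_neq0; rewrite /gl /=; lra.
  by apply: ltr0_neq0; rewrite /gl /=; lra.
  by apply: lt0r_neq0; rewrite /gl /=; lra.
  by apply: ltr0_neq0; rewrite /gl /=; lra.
  by apply: ltr0_neq0; rewrite /gl /=; lra.
  by apply: ltr0_neq0; rewrite /gl /=; lra.
  by apply: ltr0_neq0; rewrite /gl /=; lra.
have RE := @RicE' R D2 DL2 _ gnz c2R c2b.
have SD := fun F => @sumDelta R D2 DL2 DLo2 F c2D c2b c2o c2u.
have MD := fun t => @memDelta R D2 DL2 DLo2 t c2D c2b c2o.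
split => //; split.
  rewrite /signature /sig_of; apply/setP; apply: ord7; rewrite !inE /=.
  by apply: ltb_false; rewrite /gl /=; lra.
  by apply: ltb_true; rewrite /gl /=; lra.
  by apply: ltb_false; rewrite /gl /=; lra.
  by apply: ltb_true; rewrite /gl /=; lra.
  by apply: ltb_true; rewrite /gl /=; lra.
  by apply: ltb_true; rewrite /gl /=; lra.
  by apply: ltb_true; rewrite /gl /=; lra.
exists (fun l : 'I_7 => nth 0 ([:: (1/5); (3/5); (2/5); (4/5); 1; (6/5); (7/5)] : seq R) l); split; first exact: nik2.
move=> p q; rewrite RE; case: (eqVneq p q) => [_|_] //; move: p; apply: ord7;
  rewrite !big_cons big_nil /MiR /Xg /= !gnE //= /gl /=; by field.
Qed.
Lemma ex2_4 (R : realType) : is_sig (@sc_of R 7 D2) (sig_of 7 [:: 1; 2; 3; 4; 6; 7]%N).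
Proof.
pose gl : seq R := [:: (-(5/4)); (-(1/3)); (-(5/4)); (-(1/3)); (1/2); (-(3/4)); (-(3/4))].
exists (fun i : 'I_7 => nth 0 gl i).
have gnz : forall i : 'I_7, nth 0 gl i != 0.
  apply: ord7.
  by apply: ltr0_neq0; rewrite /gl /=; lra.
  by apply: ltr0_neq0; rewrite /gl /=; lra.
  by apply: ltr0_neq0; rewrite /gl /=; lra.
  by apply: ltr0_neq0; rewrite /gl /=; lra.
  by apply: lt0r_neq0; rewrite /gl /=; lra.
  by apply: ltr0_neq0; rewrite /gl /=; lra.
  by apply: ltr0_neq0; rewrite /gl /=; lra.
have RE := @RicE' R D2 DL2 _ gnz c2R c2b.
have SD := fun F => @sumDelta R D2 DL2 DLo2 F c2D c2b c2o c2u.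
have MD := fun t => @memDelta R D2 DL2 DLo2 t c2D c2b c2o.
split => //; split.
  rewrite /signature /sig_of; apply/setP; apply: ord7; rewrite !inE /=.
  by apply: ltb_true; rewrite /gl /=; lra.
  by apply: ltb_true; rewrite /gl /=; lra.
  by apply: ltb_true; rewrite /gl /=; lra.
  by apply: ltb_true; rewrite /gl /=; lra.
  by apply: ltb_false; rewrite /gl /=; lra.
  by apply: ltb_true; rewrite /gl /=; lra.
  by apply: ltb_true; rewrite /gl /=; lra.
exists (fun l : 'I_7 => nth 0 ([:: (1/5); (3/5); (2/5); (4/5); 1; (6/5); (7/5)] : seq R) l); split; first exact: nik2.
move=> p q; rewrite RE; case: (eqVneq p q) => [_|_] //; move: p; apply: ord7;
  rewrite !big_cons big_nil /MiR /Xg /= !gnE //= /gl /=; by field.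
Qed.
Lemma ex2_5 (R : realType) : is_sig (@sc_of R 7 D2) (sig_of 7 [:: 1; 3; 5]%N).
Proof.
pose gl : seq R := [:: (-(5/4)); (1/3); (-(5/4)); (1/3); (-(1/2)); (3/4); (3/4)].
exists (fun i : 'I_7 => nth 0 gl i).
have gnz : forall i : 'I_7, nth 0 gl i != 0.
  apply: ord7.
  by apply: ltr0_neq0; rewrite /gl /=; lra.
  by apply: lt0r_neq0; rewrite /gl /=; lra.
  by apply: ltr0_neq0; rewrite /gl /=; lra.
  by apply: lt0r_neq0; rewrite /gl /=; lra.
  by apply: ltr0_neq0; rewrite /gl /=; lra.
  by apply: lt0r_neq0; rewrite /gl /=; lra.
  by apply: lt0r_neq0; rewrite /gl /=; lra.
have RE := @RicE' R D2 DL2 _ gnz c2R c2b.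
have SD := fun F => @sumDelta R D2 DL2 DLo2 F c2D c2b c2o c2u.
have MD := fun t => @memDelta R D2 DL2 DLo2 t c2D c2b c2o.
split => //; split.
  rewrite /signature /sig_of; apply/setP; apply: ord7; rewrite !inE /=.
  by apply: ltb_true; rewrite /gl /=; lra.
  by apply: ltb_false; rewrite /gl /=; lra.
  by apply: ltb_true; rewrite /gl /=; lra.
  by apply: ltb_false; rewrite /gl /=; lra.
  by apply: ltb_true; rewrite /gl /=; lra.
  by apply: ltb_false; rewrite /gl /=; lra.
  by apply: ltb_false; rewrite /gl /=; lra.
exists (fun l : 'I_7 => nth 0 ([:: (1/5); (3/5); (2/5); (4/5); 1; (6/5); (7/5)] : seq R) l); split; first exact: nik2.
move=> p q; rewrite RE; case: (eqVneq p q) => [_|_] //; move: p; apply: ord7;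
  rewrite !big_cons big_nil /MiR /Xg /= !gnE //= /gl /=; by field.
Qed.
Lemma ex2_6 (R : realType) : is_sig (@sc_of R 7 D2) (sig_of 7 [:: 2; 3; 7]%N).
Proof.
pose gl : seq R := [:: (5/4); (-(1/3)); (-(5/4)); (1/3); (1/2); (3/4); (-(3/4))].
exists (fun i : 'I_7 => nth 0 gl i).
have gnz : forall i : 'I_7, nth 0 gl i != 0.
  apply: ord7.
  by apply: lt0r_neq0; rewrite /gl /=; lra.
  by apply: ltr0_neq0; rewrite /gl /=; lra.
  by apply: ltr0_neq0; rewrite /gl /=; lra.
  by apply: lt0r_neq0; rewrite /gl /=; lra.
  by apply: lt0r_neq0; rewrite /gl /=; lra.
  by apply: lt0r_neq0; rewrite /gl /=; lra.
  by apply: ltr0_neq0; rewrite /gl /=; lra.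
have RE := @RicE' R D2 DL2 _ gnz c2R c2b.
have SD := fun F => @sumDelta R D2 DL2 DLo2 F c2D c2b c2o c2u.
have MD := fun t => @memDelta R D2 DL2 DLo2 t c2D c2b c2o.
split => //; split.
  rewrite /signature /sig_of; apply/setP; apply: ord7; rewrite !inE /=.
  by apply: ltb_false; rewrite /gl /=; lra.
  by apply: ltb_true; rewrite /gl /=; lra.
  by apply: ltb_true; rewrite /gl /=; lra.
  by apply: ltb_false; rewrite /gl /=; lra.
  by apply: ltb_false; rewrite /gl /=; lra.
  by apply: ltb_false; rewrite /gl /=; lra.
  by apply: ltb_true; rewrite /gl /=; lra.
exists (fun l : 'I_7 => nth 0 ([:: (1/5); (3/5); (2/5); (4/5); 1; (6/5); (7/5)] : seq R) l); split; first exact: nik2.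
move=> p q; rewrite RE; case: (eqVneq p q) => [_|_] //; move: p; apply: ord7;
  rewrite !big_cons big_nil /MiR /Xg /= !gnE //= /gl /=; by field.
Qed.
Lemma ex2_7 (R : realType) : is_sig (@sc_of R 7 D2) (sig_of 7 [:: 3; 4; 5; 6]%N).
Proof.
pose gl : seq R := [:: (5/4); (1/3); (-(5/4)); (-(1/3)); (-(1/2)); (-(3/4)); (3/4)].
exists (fun i : 'I_7 => nth 0 gl i).
have gnz : forall i : 'I_7, nth 0 gl i != 0.
  apply: ord7.
  by apply: lt0r_neq0; rewrite /gl /=; lra.
  by apply: lt0r_neq0; rewrite /gl /=; lra.
  by apply: ltr0_neq0; rewrite /gl /=; lra.
  by apply: ltr0_neq0; rewrite /gl /=; lra.
  by apply: ltr0_neq0; rewrite /gl /=; lra.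
  by apply: ltr0_neq0; rewrite /gl /=; lra.
  by apply: lt0r_neq0; rewrite /gl /=; lra.
have RE := @RicE' R D2 DL2 _ gnz c2R c2b.
have SD := fun F => @sumDelta R D2 DL2 DLo2 F c2D c2b c2o c2u.
have MD := fun t => @memDelta R D2 DL2 DLo2 t c2D c2b c2o.
split => //; split.
  rewrite /signature /sig_of; apply/setP; apply: ord7; rewrite !inE /=.
  by apply: ltb_false; rewrite /gl /=; lra.
  by apply: ltb_false; rewrite /gl /=; lra.
  by apply: ltb_true; rewrite /gl /=; lra.
  by apply: ltb_true; rewrite /gl /=; lra.
  by apply: ltb_true; rewrite /gl /=; lra.
  by apply: ltb_true; rewrite /gl /=; lra.
  by apply: ltb_false; rewrite /gl /=; lra.
exists (fun l : 'I_7 => nth 0 ([:: (1/5); (3/5); (2/5); (4/5); 1; (6/5); (7/5)] : seq R) l); split; first exact: nik2.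
move=> p q; rewrite RE; case: (eqVneq p q) => [_|_] //; move: p; apply: ord7;
  rewrite !big_cons big_nil /MiR /Xg /= !gnE //= /gl /=; by field.
Qed.
Lemma part2 (R : realType) : forall S : {set 'I_7},
  is_sig (@sc_of R 7 D2) S <-> S \in [:: sig_of 7 [:: ]%N; sig_of 7 [:: 1; 2; 5; 7]%N; sig_of 7 [:: 1; 4; 6]%N; sig_of 7 [:: 2; 4; 5; 6; 7]%N; sig_of 7 [:: 1; 2; 3; 4; 6; 7]%N; sig_of 7 [:: 1; 3; 5]%N; sig_of 7 [:: 2; 3; 7]%N; sig_of 7 [:: 3; 4; 5; 6]%N]%N.
Proof.
move=> S; split.
  move=> [g [gnz [HS Hr]]]; rewrite -HS; exact: (@fwd2 R g gnz Hr).
move: S; apply: allP_prop; rewrite /=.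
split; first exact: ex2_0; split; first exact: ex2_1; split; first exact: ex2_2; split; first exact: ex2_3; split; first exact: ex2_4; split; first exact: ex2_5; split; first exact: ex2_6; split; first exact: ex2_7; done.
Qed.


Definition DL3 : seq (nat * nat * nat) := [:: (0,1,2); (0,2,3); (0,3,4); (0,4,5); (1,2,4); (1,3,5); (1,4,6); (2,3,6)]%N.
Definition DLo3 : seq ('I_7 * 'I_7 * 'I_7) := [:: (o_ 0, o_ 1, o_ 2); (o_ 0, o_ 2, o_ 3); (o_ 0, o_ 3, o_ 4); (o_ 0, o_ 4, o_ 5); (o_ 1, o_ 2, o_ 4); (o_ 1, o_ 3, o_ 5); (o_ 1, o_ 4, o_ 6); (o_ 2, o_ 3, o_ 6)].
Lemma c3R : checkRic D3 DL3. Proof. by vm_compute. Qed.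
Lemma c3D : checkDelta D3 DL3. Proof. by vm_compute. Qed.
Lemma c3b : all bnd DL3. Proof. by []. Qed.
Lemma c3o : DLo3 = map tri DL3.
Proof. rewrite /DLo3 /= /tri /=; by repeat f_equal; apply/val_inj; rewrite /= inordK. Qed.
Lemma c3u : uniq DLo3. Proof. by vm_compute. Qed.

Definition SigL3 : seq (seq nat) := [:: [:: ]; [:: 1; 3; 5; 7]]%N.

Lemma key3_0 : forall s0 s1 s2 s3 s4 s5 s6 : bool,
  s2 = (s0 (+) s1) -> s3 = (s0 (+) s2) -> s4 = (s0 (+) s3) -> s5 = (s0 (+) s4) -> s4 = (s1 (+) s2) -> s5 = (s1 (+) s3) -> s6 = (s1 (+) s4) -> s6 = (s2 (+) s3) ->
  has (fun l => all (fun i => nth false [:: s0; s1; s2; s3; s4; s5; s6] i == (i.+1 \in l)) (iota 0 7)) SigL3.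
Proof. by case; case; case; case; case; case; case. Qed.

Lemma fwd3 (R : realType) (g : 'I_7 -> R) : (forall i, g i != 0) -> ric_nik (@sc_of R 7 D3) g ->
  [set i | g i < 0] \in map (sig_of 7) SigL3.
Proof.
move=> gnz [v [[b [Hb Hv]] HR]].
have RE := @RicE' R D3 DL3 g gnz c3R c3b.
have SD := fun F => @sumDelta R D3 DL3 DLo3 F c3D c3b c3o c3u.
have MD := fun t => @memDelta R D3 DL3 DLo3 t c3D c3b c3o.
have r0 := HR (o_ 0) (o_ 0); rewrite RE eqxx !big_cons big_nil /MiR /Xg /= in r0.
have r1 := HR (o_ 1) (o_ 1); rewrite RE eqxx !big_cons big_nil /MiR /Xg /= in r1.
have r2 := HR (o_ 2) (o_ 2); rewrite RE eqxx !big_cons big_nil /MiR /Xg /= in r2.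
have r3 := HR (o_ 3) (o_ 3); rewrite RE eqxx !big_cons big_nil /MiR /Xg /= in r3.
have r4 := HR (o_ 4) (o_ 4); rewrite RE eqxx !big_cons big_nil /MiR /Xg /= in r4.
have r5 := HR (o_ 5) (o_ 5); rewrite RE eqxx !big_cons big_nil /MiR /Xg /= in r5.
have r6 := HR (o_ 6) (o_ 6); rewrite RE eqxx !big_cons big_nil /MiR /Xg /= in r6.
have v0 := Hv (o_ 0); rewrite SD !big_cons big_nil /rootrow /= in v0.
have v1 := Hv (o_ 1); rewrite SD !big_cons big_nil /rootrow /= in v1.
have v2 := Hv (o_ 2); rewrite SD !big_cons big_nil /rootrow /= in v2.
have v3 := Hv (o_ 3); rewrite SD !big_cons big_nil /rootrow /= in v3.
have v4 := Hv (o_ 4); rewrite SD !big_cons big_nil /rootrow /= in v4.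
have v5 := Hv (o_ 5); rewrite SD !big_cons big_nil /rootrow /= in v5.
have v6 := Hv (o_ 6); rewrite SD !big_cons big_nil /rootrow /= in v6.
have b0 := Hb (o_ 0, o_ 1, o_ 2); rewrite MD SD !big_cons big_nil !sum7 /rootrow /= in b0.
have b1 := Hb (o_ 0, o_ 2, o_ 3); rewrite MD SD !big_cons big_nil !sum7 /rootrow /= in b1.
have b2 := Hb (o_ 0, o_ 3, o_ 4); rewrite MD SD !big_cons big_nil !sum7 /rootrow /= in b2.
have b3 := Hb (o_ 0, o_ 4, o_ 5); rewrite MD SD !big_cons big_nil !sum7 /rootrow /= in b3.
have b4 := Hb (o_ 1, o_ 2, o_ 4); rewrite MD SD !big_cons big_nil !sum7 /rootrow /= in b4.
have b5 := Hb (o_ 1, o_ 3, o_ 5); rewrite MD SD !big_cons big_nil !sum7 /rootrow /= in b5.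
have b6 := Hb (o_ 1, o_ 4, o_ 6); rewrite MD SD !big_cons big_nil !sum7 /rootrow /= in b6.
have b7 := Hb (o_ 2, o_ 3, o_ 6); rewrite MD SD !big_cons big_nil !sum7 /rootrow /= in b7.
move: {b0}(b0 isT) {b1}(b1 isT) {b2}(b2 isT) {b3}(b3 isT) {b4}(b4 isT) {b5}(b5 isT) {b6}(b6 isT) {b7}(b7 isT) => b0 b1 b2 b3 b4 b5 b6 b7.
have g0 := gnz (inord 0); have g1 := gnz (inord 1); have g2 := gnz (inord 2);
have g3 := gnz (inord 3); have g4 := gnz (inord 4); have g5 := gnz (inord 5); have g6 := gnz (inord 6).
have P1 : Xg R g (0,3,4)%N * Xg R g (1,4,6)%N = Xg R g (0,1,2)%N * Xg R g (2,3,6)%N.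
  rewrite /Xg /gn /=; field; by rewrite ?g0 ?g1 ?g2 ?g3 ?g4 ?g5 ?g6.
have P2 : Xg R g (0,4,5)%N * Xg R g (1,2,4)%N = Xg R g (0,2,3)%N * Xg R g (1,3,5)%N.
  rewrite /Xg /gn /=; field; by rewrite ?g0 ?g1 ?g2 ?g3 ?g4 ?g5 ?g6.
rewrite /Xg /= in P1 P2.
set x1 := gn R g 2 / (gn R g 0 * gn R g 1) in r0 r1 r2 r3 r4 r5 r6 P1 P2.
set x2 := gn R g 3 / (gn R g 0 * gn R g 2) in r0 r1 r2 r3 r4 r5 r6 P1 P2.
set x3 := gn R g 4 / (gn R g 0 * gn R g 3) in r0 r1 r2 r3 r4 r5 r6 P1 P2.
set x4 := gn R g 5 / (gn R g 0 * gn R g 4) in r0 r1 r2 r3 r4 r5 r6 P1 P2.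
set x5 := gn R g 4 / (gn R g 1 * gn R g 2) in r0 r1 r2 r3 r4 r5 r6 P1 P2.
set x6 := gn R g 5 / (gn R g 1 * gn R g 3) in r0 r1 r2 r3 r4 r5 r6 P1 P2.
set x7 := gn R g 6 / (gn R g 1 * gn R g 4) in r0 r1 r2 r3 r4 r5 r6 P1 P2.
set x8 := gn R g 6 / (gn R g 2 * gn R g 3) in r0 r1 r2 r3 r4 r5 r6 P1 P2.
have E0 : (-1) * x1 + (-1) * x2 + (-1) * x3 + (-1) * x4 = (-1) * b (o_ 0, o_ 1, o_ 2) + (-1) * b (o_ 0, o_ 2, o_ 3) + (-1) * b (o_ 0, o_ 3, o_ 4) + (-1) * b (o_ 0, o_ 4, o_ 5) by clear -r0 v0; lra.
have E1 : (-1) * x1 + (-1) * x5 + (-1) * x6 + (-1) * x7 = (-1) * b (o_ 0, o_ 1, o_ 2) + (-1) * b (o_ 1, o_ 2, o_ 4) + (-1) * b (o_ 1, o_ 3, o_ 5) + (-1) * b (o_ 1, o_ 4, o_ 6) by clear -r1 v1; lra.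
have E2 : 1 * x1 + (-1) * x2 + (-1) * x5 + (-1) * x8 = 1 * b (o_ 0, o_ 1, o_ 2) + (-1) * b (o_ 0, o_ 2, o_ 3) + (-1) * b (o_ 1, o_ 2, o_ 4) + (-1) * b (o_ 2, o_ 3, o_ 6) by clear -r2 v2; lra.
have E3 : 1 * x2 + (-1) * x3 + (-1) * x6 + (-1) * x8 = 1 * b (o_ 0, o_ 2, o_ 3) + (-1) * b (o_ 0, o_ 3, o_ 4) + (-1) * b (o_ 1, o_ 3, o_ 5) + (-1) * b (o_ 2, o_ 3, o_ 6) by clear -r3 v3; lra.
have E4 : 1 * x3 + (-1) * x4 + 1 * x5 + (-1) * x7 = 1 * b (o_ 0, o_ 3, o_ 4) + (-1) * b (o_ 0, o_ 4, o_ 5) + 1 * b (o_ 1, o_ 2, o_ 4) + (-1) * b (o_ 1, o_ 4, o_ 6) by clear -r4 v4; lra.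
have E5 : 1 * x4 + 1 * x6 = 1 * b (o_ 0, o_ 4, o_ 5) + 1 * b (o_ 1, o_ 3, o_ 5) by clear -r5 v5; lra.
have E6 : 1 * x7 + 1 * x8 = 1 * b (o_ 1, o_ 4, o_ 6) + 1 * b (o_ 2, o_ 3, o_ 6) by clear -r6 v6; lra.
have F0 : 3 * b (o_ 0, o_ 1, o_ 2) + 1 * b (o_ 0, o_ 3, o_ 4) + 1 * b (o_ 0, o_ 4, o_ 5) + 1 * b (o_ 1, o_ 3, o_ 5) + 1 * b (o_ 1, o_ 4, o_ 6) + (-1) * b (o_ 2, o_ 3, o_ 6) = 1 by clear -b0; lra.
have F1 : 3 * b (o_ 0, o_ 2, o_ 3) + 1 * b (o_ 0, o_ 4, o_ 5) + 1 * b (o_ 1, o_ 2, o_ 4) + (-1) * b (o_ 1, o_ 3, o_ 5) = 1 by clear -b1; lra.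
have F2 : 1 * b (o_ 0, o_ 1, o_ 2) + 3 * b (o_ 0, o_ 3, o_ 4) + 1 * b (o_ 1, o_ 2, o_ 4) + 1 * b (o_ 1, o_ 3, o_ 5) + (-1) * b (o_ 1, o_ 4, o_ 6) + 1 * b (o_ 2, o_ 3, o_ 6) = 1 by clear -b2; lra.
have F3 : 1 * b (o_ 0, o_ 1, o_ 2) + 1 * b (o_ 0, o_ 2, o_ 3) + 3 * b (o_ 0, o_ 4, o_ 5) + (-1) * b (o_ 1, o_ 2, o_ 4) + 1 * b (o_ 1, o_ 3, o_ 5) + 1 * b (o_ 1, o_ 4, o_ 6) = 1 by clear -b3; lra.
have F4 : 1 * b (o_ 0, o_ 2, o_ 3) + 1 * b (o_ 0, o_ 3, o_ 4) + (-1) * b (o_ 0, o_ 4, o_ 5) + 3 * b (o_ 1, o_ 2, o_ 4) + 1 * b (o_ 1, o_ 3, o_ 5) + 1 * b (o_ 2, o_ 3, o_ 6) = 1 by clear -b4; lra.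
have F5 : 1 * b (o_ 0, o_ 1, o_ 2) + (-1) * b (o_ 0, o_ 2, o_ 3) + 1 * b (o_ 0, o_ 3, o_ 4) + 1 * b (o_ 0, o_ 4, o_ 5) + 1 * b (o_ 1, o_ 2, o_ 4) + 3 * b (o_ 1, o_ 3, o_ 5) + 1 * b (o_ 1, o_ 4, o_ 6) + 1 * b (o_ 2, o_ 3, o_ 6) = 1 by clear -b5; lra.
have F6 : 1 * b (o_ 0, o_ 1, o_ 2) + (-1) * b (o_ 0, o_ 3, o_ 4) + 1 * b (o_ 0, o_ 4, o_ 5) + 1 * b (o_ 1, o_ 3, o_ 5) + 3 * b (o_ 1, o_ 4, o_ 6) + 1 * b (o_ 2, o_ 3, o_ 6) = 1 by clear -b6; lra.
have F7 : (-1) * b (o_ 0, o_ 1, o_ 2) + 1 * b (o_ 0, o_ 3, o_ 4) + 1 * b (o_ 1, o_ 2, o_ 4) + 1 * b (o_ 1, o_ 3, o_ 5) + 1 * b (o_ 1, o_ 4, o_ 6) + 3 * b (o_ 2, o_ 3, o_ 6) = 1 by clear -b7; lra.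
have GX0 : 3 * x1 + 1 * x3 + 1 * x4 + 1 * x6 + 1 * x7 + (-1) * x8 = 1 by clear -E0 E1 E2 E3 E4 E5 E6 F0; lra.
have GX1 : 3 * x2 + 1 * x4 + 1 * x5 + (-1) * x6 = 1 by clear -E0 E1 E2 E3 E4 E5 E6 F1; lra.
have GX2 : 1 * x1 + 3 * x3 + 1 * x5 + 1 * x6 + (-1) * x7 + 1 * x8 = 1 by clear -E0 E1 E2 E3 E4 E5 E6 F2; lra.
have GX3 : 1 * x1 + 1 * x2 + 3 * x4 + (-1) * x5 + 1 * x6 + 1 * x7 = 1 by clear -E0 E1 E2 E3 E4 E5 E6 F3; lra.
have GX4 : 1 * x2 + 1 * x3 + (-1) * x4 + 3 * x5 + 1 * x6 + 1 * x8 = 1 by clear -E0 E1 E2 E3 E4 E5 E6 F4; lra.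
have GX5 : 1 * x1 + (-1) * x2 + 1 * x3 + 1 * x4 + 1 * x5 + 3 * x6 + 1 * x7 + 1 * x8 = 1 by clear -E0 E1 E2 E3 E4 E5 E6 F5; lra.
have GX6 : 1 * x1 + (-1) * x3 + 1 * x4 + 1 * x6 + 3 * x7 + 1 * x8 = 1 by clear -E0 E1 E2 E3 E4 E5 E6 F6; lra.
have GX7 : (-1) * x1 + 1 * x3 + 1 * x5 + 1 * x6 + 1 * x7 + 3 * x8 = 1 by clear -E0 E1 E2 E3 E4 E5 E6 F7; lra.
have L3 : x3 = (2/5) + (-1) * x1 + 0 * x2 by clear -GX0 GX1 GX2 GX3 GX4 GX5 GX6 GX7; lra.
have L4 : x4 = (2/5) + 0 * x1 + (-1) * x2 by clear -GX0 GX1 GX2 GX3 GX4 GX5 GX6 GX7; lra.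
have L5 : x5 = (2/5) + 0 * x1 + (-1) * x2 by clear -GX0 GX1 GX2 GX3 GX4 GX5 GX6 GX7; lra.
have L6 : x6 = (-(1/5)) + 0 * x1 + 1 * x2 by clear -GX0 GX1 GX2 GX3 GX4 GX5 GX6 GX7; lra.
have L7 : x7 = (2/5) + (-1) * x1 + 0 * x2 by clear -GX0 GX1 GX2 GX3 GX4 GX5 GX6 GX7; lra.
have L8 : x8 = 0 + 1 * x1 + 0 * x2 by clear -GX0 GX1 GX2 GX3 GX4 GX5 GX6 GX7; lra.
rewrite L3 L4 L5 L6 L7 L8 in P1 P2.
have gnz' := @gnz' R g gnz.
apply: (@sig_decide R g [seq gn R g n < 0 | n <- iota 0 7] SigL3).
  by move=> i; rewrite (nth_map 0%N) ?size_iota // nth_iota // add0n gn_val.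
have p1 : x1 = 1/5 by clear -P1 P2; nra.
have Hq : x2 = 4/15 by clear -P1 P2; nra.
apply: key3_0.
  - apply: sgn_pos (gnz' 0) (gnz' 1) _; rewrite -/x1; clear -p1 Hq L3 L4 L5 L6 L7 L8; lra.
  - apply: sgn_pos (gnz' 0) (gnz' 2) _; rewrite -/x2; clear -p1 Hq L3 L4 L5 L6 L7 L8; lra.
  - apply: sgn_pos (gnz' 0) (gnz' 3) _; rewrite -/x3; clear -p1 Hq L3 L4 L5 L6 L7 L8; lra.
  - apply: sgn_pos (gnz' 0) (gnz' 4) _; rewrite -/x4; clear -p1 Hq L3 L4 L5 L6 L7 L8; lra.
  - apply: sgn_pos (gnz' 1) (gnz' 2) _; rewrite -/x5; clear -p1 Hq L3 L4 L5 L6 L7 L8; lra.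
  - apply: sgn_pos (gnz' 1) (gnz' 3) _; rewrite -/x6; clear -p1 Hq L3 L4 L5 L6 L7 L8; lra.
  - apply: sgn_pos (gnz' 1) (gnz' 4) _; rewrite -/x7; clear -p1 Hq L3 L4 L5 L6 L7 L8; lra.
  - apply: sgn_pos (gnz' 2) (gnz' 3) _; rewrite -/x8; clear -p1 Hq L3 L4 L5 L6 L7 L8; lra.
Qed.
Lemma nik3 (R : realType) : nik_diag (@sc_of R 7 D3) (fun l : 'I_7 => nth 0 ([:: (1/5); (2/5); (3/5); (4/5); 1; (6/5); (7/5)] : seq R) l).
Proof.
have SD := fun F => @sumDelta R D3 DL3 DLo3 F c3D c3b c3o c3u.
have MD := fun t => @memDelta R D3 DL3 DLo3 t c3D c3b c3o.
  exists (fun t => nth 0 ([:: 0; (1/5); (2/5); (1/5); (1/5); 0; (2/5); 0] : seq R) (index t DLo3)); split.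
    move=> t; rewrite MD; move: t; apply: allP_prop; rewrite /=.
    repeat match goal with |- _ /\ _ => split | |- True => exact I end; rewrite SD !big_cons big_nil !sum7 /rootrow /=; lra.
  move=> l; move: l; apply: ord7; rewrite SD !big_cons big_nil /rootrow /=; lra.
Qed.
Lemma ex3_0 (R : realType) : is_sig (@sc_of R 7 D3) (sig_of 7 [:: ]%N).
Proof.
pose gl : seq R := [:: (5/2); (5/2); (5/4); (5/6); (5/12); (5/36); (5/24)].
exists (fun i : 'I_7 => nth 0 gl i).
have gnz : forall i : 'I_7, nth 0 gl i != 0.
  apply: ord7.
  by apply: lt0r_neq0; rewrite /gl /=; lra.
  by apply: lt0r_neq0; rewrite /gl /=; lra.
  by apply: lt0r_neq0; rewrite /gl /=; lra.
  by apply: lt0r_neq0; rewrite /gl /=; lra.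
  by apply: lt0r_neq0; rewrite /gl /=; lra.
  by apply: lt0r_neq0; rewrite /gl /=; lra.
  by apply: lt0r_neq0; rewrite /gl /=; lra.
have RE := @RicE' R D3 DL3 _ gnz c3R c3b.
have SD := fun F => @sumDelta R D3 DL3 DLo3 F c3D c3b c3o c3u.
have MD := fun t => @memDelta R D3 DL3 DLo3 t c3D c3b c3o.
split => //; split.
  rewrite /signature /sig_of; apply/setP; apply: ord7; rewrite !inE /=.
  by apply: ltb_false; rewrite /gl /=; lra.
  by apply: ltb_false; rewrite /gl /=; lra.
  by apply: ltb_false; rewrite /gl /=; lra.
  by apply: ltb_false; rewrite /gl /=; lra.
  by apply: ltb_false; rewrite /gl /=; lra.
  by apply: ltb_false; rewrite /gl /=; lra.
  by apply: ltb_false; rewrite /gl /=; lra.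
exists (fun l : 'I_7 => nth 0 ([:: (1/5); (2/5); (3/5); (4/5); 1; (6/5); (7/5)] : seq R) l); split; first exact: nik3.
move=> p q; rewrite RE; case: (eqVneq p q) => [_|_] //; move: p; apply: ord7;
  rewrite !big_cons big_nil /MiR /Xg /= !gnE //= /gl /=; by field.
Qed.
Lemma ex3_1 (R : realType) : is_sig (@sc_of R 7 D3) (sig_of 7 [:: 1; 3; 5; 7]%N).
Proof.
pose gl : seq R := [:: (-(5/2)); (5/2); (-(5/4)); (5/6); (-(5/12)); (5/36); (-(5/24))].
exists (fun i : 'I_7 => nth 0 gl i).
have gnz : forall i : 'I_7, nth 0 gl i != 0.
  apply: ord7.
  by apply: ltr0_neq0; rewrite /gl /=; lra.
  by apply: lt0r_neq0; rewrite /gl /=; lra.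
  by apply: ltr0_neq0; rewrite /gl /=; lra.
  by apply: lt0r_neq0; rewrite /gl /=; lra.
  by apply: ltr0_neq0; rewrite /gl /=; lra.
  by apply: lt0r_neq0; rewrite /gl /=; lra.
  by apply: ltr0_neq0; rewrite /gl /=; lra.
have RE := @RicE' R D3 DL3 _ gnz c3R c3b.
have SD := fun F => @sumDelta R D3 DL3 DLo3 F c3D c3b c3o c3u.
have MD := fun t => @memDelta R D3 DL3 DLo3 t c3D c3b c3o.
split => //; split.
  rewrite /signature /sig_of; apply/setP; apply: ord7; rewrite !inE /=.
  by apply: ltb_true; rewrite /gl /=; lra.
  by apply: ltb_false; rewrite /gl /=; lra.
  by apply: ltb_true; rewrite /gl /=; lra.
  by apply: ltb_false; rewrite /gl /=; lra.
  by apply: ltb_true; rewrite /gl /=; lra.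
  by apply: ltb_false; rewrite /gl /=; lra.
  by apply: ltb_true; rewrite /gl /=; lra.
exists (fun l : 'I_7 => nth 0 ([:: (1/5); (2/5); (3/5); (4/5); 1; (6/5); (7/5)] : seq R) l); split; first exact: nik3.
move=> p q; rewrite RE; case: (eqVneq p q) => [_|_] //; move: p; apply: ord7;
  rewrite !big_cons big_nil /MiR /Xg /= !gnE //= /gl /=; by field.
Qed.
Lemma part3 (R : realType) : forall S : {set 'I_7},
  is_sig (@sc_of R 7 D3) S <-> S \in [:: sig_of 7 [:: ]%N; sig_of 7 [:: 1; 3; 5; 7]%N]%N.
Proof.
move=> S; split.
  move=> [g [gnz [HS Hr]]]; rewrite -HS; exact: (@fwd3 R g gnz Hr).
move: S; apply: allP_prop; rewrite /=.
split; first exact: ex3_0; split; first exact: ex3_1; done.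
Qed.


Theorem lemma2p7 (R : realType) :
  (forall S : {set 'I_7},
     is_sig (@sc_of R 7 D1) S <->
     S \in [:: sig_of 7 [::]%N; sig_of 7 [:: 1; 2; 4; 5; 7]%N; sig_of 7 [:: 1; 3; 5; 7]%N;
               sig_of 7 [:: 2; 3; 4]%N; sig_of 7 [:: 1; 2; 5]%N; sig_of 7 [:: 1; 3; 4; 5]%N;
               sig_of 7 [:: 2; 3; 7]%N; sig_of 7 [:: 4; 7]%N]%N)
  /\
  (forall S : {set 'I_7},
     is_sig (@sc_of R 7 D2) S <->
     S \in [:: sig_of 7 [::]%N; sig_of 7 [:: 1; 2; 5; 7]%N; sig_of 7 [:: 1; 4; 6]%N;
               sig_of 7 [:: 2; 4; 5; 6; 7]%N; sig_of 7 [:: 1; 2; 3; 4; 6; 7]%N;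
               sig_of 7 [:: 1; 3; 5]%N; sig_of 7 [:: 2; 3; 7]%N; sig_of 7 [:: 3; 4; 5; 6]%N]%N)
  /\
  (forall S : {set 'I_7},
     is_sig (@sc_of R 7 D3) S <->
     S \in [:: sig_of 7 [::]%N; sig_of 7 [:: 1; 3; 5; 7]%N]%N).
Proof.
split; first exact: part1.
split; first exact: part2.
exact: part3.
Qed.
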